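(* Let $r\ge1$, $0<\epsilon<1/4$, $c>0$ and $\lambda=(2/3)^{1/(4r)}$. Let $D(u)$, $u\in[0,1]$, be real antisymmetric $2N\times2N$ matrices with $|D_{p,q}(u)|\le c\epsilon r^2\lambda^{|p-q|}$ for all $p,q,u$. Let $\hat U=\mathcal T\exp[i\int_0^1du\,\hat D(u)]$, where $\hat D(u)=\frac i4\sum_{p,q}D_{p,q}(u)c_pc_q$, and expand $\hat U=\sum_E\omega_EE$ over Majorana monomials, with $\omega_E=2^{-N}\mathrm{tr}(E^\dagger\hat U)$. Then for every Majorana monomial $E$ with fermionic weight $w_f$ and qubit weight $w_q$, $$|\omega_E|\le\epsilon^{w_f/4}\lambda^{w_q}e^{yN},\qquad y=\frac{3\sqrt\epsilon\,c\,r^2}{1-\sqrt\lambda}.$$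
   Context: Majorana operators $c_1,\dots,c_{2N}$ are realized on $N$ qubits by the Jordan–Wigner map: $c_{2j-1}=Z_1\cdots Z_{j-1}X_j$ and $c_{2j}=Z_1\cdots Z_{j-1}Y_j$, where $X_j,Y_j,Z_j$ are Pauli operators on qubit $j$. A Majorana monomial is $E=c_{p_1}\cdots c_{p_k}$ with $p_1<\dots<p_k$; there are $4^N$ of them and they form an operator basis. Its fermionic weight is $w_f(E)=k$. Its qubit weight $w_q(E)$ is the number of qubits on which the Pauli operator $E$ (under Jordan–Wigner) acts nontrivially. $\mathcal T\exp[i\int_0^1du\,\hat D(u)]$ denotes $\hat U(1)$, where $\partial_u\hat U(u)=i\hat D(u)\hat U(u)$ and $\hat U(0)=I$. *)

(* Defs.v *)
From Stdlib Require Import Reals Lra Lia Arith List Sorted ClassicalEpsilon.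
Import ListNotations.
Open Scope R_scope.

Record C := mkC { Re : R; Im : R }.
Definition C0 : C := mkC 0 0.
Definition C1 : C := mkC 1 0.
Definition Ci : C := mkC 0 1.
Definition RtoC (x : R) : C := mkC x 0.
Definition Cadd (z w : C) : C := mkC (Re z + Re w) (Im z + Im w).
Definition Copp (z : C) : C := mkC (- Re z) (- Im z).
Definition Cmul (z w : C) : C :=
  mkC (Re z * Re w - Im z * Im w) (Re z * Im w + Im z * Re w).
Definition Cconj (z : C) : C := mkC (Re z) (- Im z).
Definition Cnorm (z : C) : R := sqrt (Re z * Re z + Im z * Im z).

Fixpoint csum (f : nat -> C) (n : nat) : C :=
  match n with O => C0 | S m => Cadd (csum f m) (f m) end.
Fixpoint cprod (f : nat -> C) (n : nat) : C :=
  match n with O => C1 | S m => Cmul (cprod f m) (f m) end.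

(* ---------- matrices (indices 0 .. d-1; entries outside are irrelevant) ---------- *)
Definition Mx := nat -> nat -> C.
Definition mx_id : Mx := fun i j => if Nat.eqb i j then C1 else C0.
Definition mx_mul (d : nat) (A B : Mx) : Mx :=
  fun i j => csum (fun k => Cmul (A i k) (B k j)) d.
Definition mx_scale (z : C) (A : Mx) : Mx := fun i j => Cmul z (A i j).
Definition mx_sum (f : nat -> Mx) (n : nat) : Mx := fun i j => csum (fun k => f k i j) n.
Definition mx_adj (A : Mx) : Mx := fun i j => Cconj (A j i).
Definition mx_trace (d : nat) (A : Mx) : C := csum (fun a => A a a) d.

(* labels: 0 = I, 1 = X, 2 = Y, 3 = Z; basis |0>,|1> of one qubit *)
Definition pauli1 (l : nat) (x y : bool) : C :=
  match l with
  | 1%nat => if Bool.eqb x y then C0 else C1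
  | 2%nat => match x, y with
             | false, true => Copp Ci
             | true, false => Ci
             | _, _ => C0 end
  | 3%nat => if Bool.eqb x y then (if x then Copp C1 else C1) else C0
  | _ => if Bool.eqb x y then C1 else C0
  end.

(* qubit k (0-based) is bit k of the basis-state index *)
Definition pauli_string (N : nat) (s : nat -> nat) : Mx :=
  fun a b => cprod (fun k => pauli1 (s k) (Nat.testbit a k) (Nat.testbit b k)) N.

(* Jordan-Wigner Majorana c_p, p = 1 .. 2N:
   c_{2j-1} = Z_1..Z_{j-1} X_j , c_{2j} = Z_1..Z_{j-1} Y_j  (qubit j is 0-based j-1) *)
Definition majorana (N p : nat) : Mx :=
  pauli_string N (fun k =>
    let j0 := ((p - 1) / 2)%nat in
    if Nat.ltb k j0 then 3%nat
    else if Nat.eqb k j0 then (if Nat.odd p then 1%nat else 2%nat)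
    else 0%nat).

Definition monomial (N : nat) (ps : list nat) : Mx :=
  fold_right (fun p M => mx_mul (2 ^ N) (majorana N p) M) mx_id ps.

Definition monomial_index (N : nat) (ps : list nat) : Prop :=
  Sorted lt ps /\ Forall (fun p => (1 <= p <= 2 * N)%nat) ps.

Definition fermionic_weight (ps : list nat) : nat := length ps.

(* M acts trivially on qubit k, i.e. M = I_k (x) M' *)
Definition acts_trivially_on (N k : nat) (M : Mx) : Prop :=
  forall a b, (a < 2 ^ N)%nat -> (b < 2 ^ N)%nat ->
    (Nat.testbit a k <> Nat.testbit b k -> M a b = C0) /\
    M a b = M (Nat.lxor a (2 ^ k)) (Nat.lxor b (2 ^ k)).

Definition bool_of (P : Prop) : bool :=
  if excluded_middle_informative P then true else false.

Definition qubit_weight (N : nat) (M : Mx) : nat :=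
  length (filter (fun k => negb (bool_of (acts_trivially_on N k M))) (seq 0 N)).

Definition Dhat (N : nat) (D : R -> nat -> nat -> R) (u : R) : Mx :=
  mx_scale (Cmul Ci (RtoC (/ 4)))
    (mx_sum (fun p => mx_sum (fun q =>
        mx_scale (RtoC (D u (S p) (S q)))
          (mx_mul (2 ^ N) (majorana N (S p)) (majorana N (S q)))) (2 * N)) (2 * N)).

(* U solves dU/du = i Dhat(u) U(u) on (0,1), U(0) = I, U continuous on [0,1];
   then U 1 = T exp[i int_0^1 Dhat]. *)
Definition is_Texp (N : nat) (D : R -> nat -> nat -> R) (U : R -> Mx) : Prop :=
  let d := (2 ^ N)%nat in
  (forall i j, (i < d)%nat -> (j < d)%nat -> U 0 i j = mx_id i j) /\
  (forall u, 0 < u < 1 -> forall i j, (i < d)%nat -> (j < d)%nat ->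
     derivable_pt_lim (fun t => Re (U t i j)) u
       (Re (mx_mul d (mx_scale Ci (Dhat N D u)) (U u) i j)) /\
     derivable_pt_lim (fun t => Im (U t i j)) u
       (Im (mx_mul d (mx_scale Ci (Dhat N D u)) (U u) i j))) /\
  (forall i j, (i < d)%nat -> (j < d)%nat ->
     forall t0, (t0 = 0 \/ t0 = 1) ->
     limit1_in (fun t => Re (U t i j)) (fun t => 0 <= t <= 1) (Re (U t0 i j)) t0 /\
     limit1_in (fun t => Im (U t i j)) (fun t => 0 <= t <= 1) (Im (U t0 i j)) t0).

Definition omega (N : nat) (E U : Mx) : C :=
  Cmul (RtoC (/ 2 ^ N)) (mx_trace (2 ^ N) (mx_mul (2 ^ N) (mx_adj E) U)).

Definition natdist (p q : nat) : nat := ((p - q) + (q - p))%nat.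

Definition lam (r : R) : R := Rpower (2 / 3) (/ (4 * r)).
Definition yexp (eps c r : R) : R := 3 * sqrt eps * c * r ^ 2 / (1 - sqrt (lam r)).

(* Main.v *)
Require Import Defs.
From Stdlib Require Import Reals List.
Open Scope R_scope.
From Stdlib Require Import Lra Lia Arith Sorted Permutation Ring Classical ClassicalEpsilon.
Import ListNotations.
Import Defs.

Lemma C_ext : forall z w : C, Re z = Re w -> Im z = Im w -> z = w.
Proof. intros [a b] [c d]; simpl; intros; subst; reflexivity. Qed.

Definition Csub z w := Cadd z (Copp w).

Lemma Cring_th : ring_theory C0 C1 Cadd Cmul Csub Copp (@eq C).
Proof.
  constructor; intros; apply C_ext; unfold Csub, Cadd, Cmul, Copp, C0, C1; simpl; ring.
Qed.
Add Ring Cring : Cring_th.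

Ltac Ceq := apply C_ext; unfold Csub, Cadd, Cmul, Copp, C0, C1, Ci, RtoC, Cconj; simpl; try ring.

Lemma RtoC_mul a b : RtoC (a*b) = Cmul (RtoC a) (RtoC b).
Proof. Ceq. Qed.
Lemma RtoC_add a b : RtoC (a+b) = Cadd (RtoC a) (RtoC b).
Proof. Ceq. Qed.
Lemma RtoC_opp a : RtoC (-a) = Copp (RtoC a).
Proof. Ceq. Qed.
Lemma RtoC_1 : RtoC 1 = C1. Proof. Ceq. Qed.
Lemma RtoC_0 : RtoC 0 = C0. Proof. Ceq. Qed.

Lemma Cconj_mul z w : Cconj (Cmul z w) = Cmul (Cconj z) (Cconj w).
Proof. Ceq. Qed.
Lemma Cconj_add z w : Cconj (Cadd z w) = Cadd (Cconj z) (Cconj w).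
Proof. Ceq. Qed.
Lemma Cconj_RtoC a : Cconj (RtoC a) = RtoC a.
Proof. Ceq. Qed.
Lemma Cconj_invol z : Cconj (Cconj z) = z.
Proof. Ceq. Qed.

Lemma csum_ext f g n : (forall k, (k < n)%nat -> f k = g k) -> csum f n = csum g n.
Proof. induction n; simpl; intros; auto. rewrite IHn by auto. rewrite H by lia. auto. Qed.
Lemma csum_add f g n : csum (fun k => Cadd (f k) (g k)) n = Cadd (csum f n) (csum g n).
Proof. induction n; simpl. Ceq. rewrite IHn; ring. Qed.
Lemma csum_mul_l c f n : csum (fun k => Cmul c (f k)) n = Cmul c (csum f n).
Proof. induction n; simpl. Ceq. rewrite IHn; ring. Qed.
Lemma csum_mul_r c f n : csum (fun k => Cmul (f k) c) n = Cmul (csum f n) c.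
Proof. induction n; simpl. Ceq. rewrite IHn; ring. Qed.
Lemma csum_zero n : csum (fun _ => C0) n = C0.
Proof. induction n; simpl; auto. rewrite IHn; ring. Qed.
Lemma csum_swap f n m : csum (fun k => csum (fun l => f k l) m) n = csum (fun l => csum (fun k => f k l) n) m.
Proof.
  induction n; simpl. rewrite csum_zero; auto.
  rewrite IHn. rewrite <- csum_add. auto.
Qed.
Lemma csum_split f n m : csum f (n + m) = Cadd (csum f n) (csum (fun k => f (n + k)%nat) m).
Proof. induction m; simpl. rewrite Nat.add_0_r; ring. rewrite Nat.add_succ_r; simpl. rewrite IHm; ring. Qed.
Lemma csum_single f n k0 : (k0 < n)%nat -> (forall k, (k < n)%nat -> k <> k0 -> f k = C0) -> csum f n = f k0.
Proof.
  induction n; intros; [lia|]. simpl.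
  destruct (Nat.eq_dec k0 n).
  - subst. rewrite (csum_ext f (fun _ => C0)). rewrite csum_zero; ring.
    intros; apply H0; lia.
  - rewrite IHn by (try lia; intros; apply H0; lia). rewrite (H0 n) by lia. ring.
Qed.
Lemma csum_opp f n : csum (fun k => Copp (f k)) n = Copp (csum f n).
Proof. induction n; simpl. Ceq; lra. rewrite IHn; ring. Qed.
Lemma csum_conj f n : csum (fun k => Cconj (f k)) n = Cconj (csum f n).
Proof. induction n; simpl. Ceq; lra. rewrite IHn, Cconj_add; auto. Qed.

Lemma cprod_ext f g n : (forall k, (k < n)%nat -> f k = g k) -> cprod f n = cprod g n.
Proof. induction n; simpl; intros; auto. rewrite IHn by auto. rewrite H by lia. auto. Qed.
Lemma cprod_mul f g n : cprod (fun k => Cmul (f k) (g k)) n = Cmul (cprod f n) (cprod g n).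
Proof. induction n; simpl. ring. rewrite IHn; ring. Qed.
Lemma cprod_one n : cprod (fun _ => C1) n = C1.
Proof. induction n; simpl; auto. rewrite IHn; ring. Qed.
Lemma cprod_zero f n k0 : (k0 < n)%nat -> f k0 = C0 -> cprod f n = C0.
Proof.
  induction n; intros; [lia|]. simpl.
  destruct (Nat.eq_dec k0 n). subst. rewrite H0; ring.
  rewrite IHn by (auto; lia). ring.
Qed.
Lemma cprod_single f n k0 : (k0 < n)%nat -> (forall k, (k < n)%nat -> k <> k0 -> f k = C1) -> cprod f n = f k0.
Proof.
  induction n; intros; [lia|]. simpl.
  destruct (Nat.eq_dec k0 n).
  - subst. rewrite (cprod_ext f (fun _ => C1)). rewrite cprod_one; ring.
    intros; apply H0; lia.
  - rewrite IHn by (try lia; intros; apply H0; lia). rewrite (H0 n) by lia. ring.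
Qed.
Lemma cprod_conj f n : cprod (fun k => Cconj (f k)) n = Cconj (cprod f n).
Proof. induction n; simpl. Ceq; lra. rewrite IHn, Cconj_mul; auto. Qed.

Lemma bit_high a N n : (a < 2 ^ N)%nat -> (N <= n)%nat -> Nat.testbit a n = false.
Proof.
  intros. rewrite <- (Nat.mod_small a (2^N)) by auto. apply Nat.mod_pow2_bits_high; auto.
Qed.
Lemma bits_lt a N : (forall n, (N <= n)%nat -> Nat.testbit a n = false) -> (a < 2 ^ N)%nat.
Proof.
  intros. assert (a = a mod 2 ^ N).
  { apply Nat.bits_inj; intro n. destruct (Nat.lt_ge_cases n N).
    rewrite Nat.mod_pow2_bits_low; auto. rewrite Nat.mod_pow2_bits_high; auto. }
  rewrite H0. apply Nat.mod_upper_bound. apply Nat.pow_nonzero; lia.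
Qed.
Lemma bits_eq a b N : (a < 2^N)%nat -> (b < 2^N)%nat ->
  (forall n, (n < N)%nat -> Nat.testbit a n = Nat.testbit b n) -> a = b.
Proof.
  intros. apply Nat.bits_inj; intro n. destruct (Nat.lt_ge_cases n N); auto.
  rewrite (bit_high a N), (bit_high b N); auto.
Qed.
Lemma xor_lt a b N : (a < 2^N)%nat -> (b < 2^N)%nat -> (Nat.lxor a b < 2^N)%nat.
Proof.
  intros. apply bits_lt; intros. rewrite Nat.lxor_spec, (bit_high a N), (bit_high b N); auto.
Qed.
Lemma pow2_lt k N : (k < N)%nat -> (2^k < 2^N)%nat.
Proof. intros; apply Nat.pow_lt_mono_r; lia. Qed.
Lemma xor_invol a b : Nat.lxor (Nat.lxor a b) b = a.
Proof. rewrite Nat.lxor_assoc, Nat.lxor_nilpotent, Nat.lxor_0_r; auto. Qed.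
Lemma bit_add_pow a N n : (a < 2^N)%nat -> (n < N)%nat -> Nat.testbit (2^N + a) n = Nat.testbit a n.
Proof.
  intros. rewrite <- (Nat.mod_pow2_bits_low _ N) by auto.
  f_equal. rewrite Nat.add_comm. rewrite <- (Nat.mul_1_l (2^N)) at 1.
  rewrite Nat.Div0.mod_add. apply Nat.mod_small; auto.
Qed.
Lemma bit_add_pow_top a N : (a < 2^N)%nat -> Nat.testbit (2^N + a) N = true.
Proof.
  intros. apply (Nat.testbit_unique _ _ true a 0); auto. simpl. lia.
Qed.
Lemma diff_bit a b N : (a < 2^N)%nat -> (b < 2^N)%nat -> a <> b ->
  exists k, (k < N)%nat /\ Nat.testbit a k <> Nat.testbit b k.
Proof.
  intros. destruct (Classical_Prop.classic (exists k, (k < N)%nat /\ Nat.testbit a k <> Nat.testbit b k)); auto.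
  exfalso; apply H1; apply (bits_eq a b N); auto. intros.
  destruct (Bool.bool_dec (Nat.testbit a n) (Nat.testbit b n)); auto. exfalso; apply H2; eauto.
Qed.

Definition tens (N : nat) (F : nat -> bool -> bool -> C) : Mx :=
  fun a b => cprod (fun k => F k (Nat.testbit a k) (Nat.testbit b k)) N.

Definition qmul (F G : bool -> bool -> C) : bool -> bool -> C :=
  fun x y => Cadd (Cmul (F x false) (G false y)) (Cmul (F x true) (G true y)).

Lemma tens_mul N F G a b :
  mx_mul (2^N) (tens N F) (tens N G) a b = tens N (fun k => qmul (F k) (G k)) a b.
Proof.
  revert a b. induction N; intros a b.
  - unfold mx_mul, tens; simpl. ring.
  - unfold mx_mul. replace (2 ^ S N)%nat with (2^N + 2^N)%nat by (simpl; lia).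
    rewrite csum_split.
    assert (E1: csum (fun k : nat => Cmul (tens (S N) F a k) (tens (S N) G k b)) (2 ^ N)
      = csum (fun k => Cmul (Cmul (tens N F a k) (tens N G k b))
       (Cmul (F N (Nat.testbit a N) false) (G N false (Nat.testbit b N)))) (2^N)).
    { apply csum_ext. intros. unfold tens; simpl. rewrite (bit_high k N N) by lia. ring. }
    assert (E2: csum (fun k : nat => Cmul (tens (S N) F a (2 ^ N + k)%nat)
          (tens (S N) G (2 ^ N + k)%nat b)) (2 ^ N)
      = csum (fun k => Cmul (Cmul (tens N F a k) (tens N G k b))
       (Cmul (F N (Nat.testbit a N) true) (G N true (Nat.testbit b N)))) (2^N)).
    { apply csum_ext. intros. unfold tens; simpl. rewrite bit_add_pow_top by auto.
        rewrite (cprod_ext (fun k0 => F k0 (Nat.testbit a k0) (Nat.testbit (2 ^ N + k) k0))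
                   (fun k0 => F k0 (Nat.testbit a k0) (Nat.testbit k k0))).
        rewrite (cprod_ext (fun k0 => G k0 (Nat.testbit (2 ^ N + k) k0) (Nat.testbit b k0))
                   (fun k0 => G k0 (Nat.testbit k k0) (Nat.testbit b k0))). ring.
        intros; rewrite bit_add_pow; auto. intros; rewrite bit_add_pow; auto. }
    rewrite E1, E2.
    rewrite !csum_mul_r. pose proof (IHN a b) as E. unfold mx_mul in E. rewrite E.
    unfold tens, qmul; simpl. ring.
Qed.

Lemma pauli_tens N s : pauli_string N s = tens N (fun k => pauli1 (s k)).
Proof. reflexivity. Qed.

Definition qdelta (x y : bool) : C := if Bool.eqb x y then C1 else C0.

Lemma tens_delta N a b : (a < 2^N)%nat -> (b < 2^N)%nat ->
  tens N (fun _ => qdelta) a b = mx_id a b.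
Proof.
  intros. unfold tens, mx_id. destruct (Nat.eqb_spec a b).
  - subst. rewrite (cprod_ext _ (fun _ => C1)). apply cprod_one.
    intros; unfold qdelta; rewrite Bool.eqb_reflx; auto.
  - destruct (diff_bit a b N H H0 n) as [k [Hk Hb]].
    apply (cprod_zero _ _ k); auto. unfold qdelta.
    destruct (Nat.testbit a k), (Nat.testbit b k); simpl; congruence.
Qed.

Definition lab (l : nat) : nat := match l with 1%nat => 1%nat | 2%nat => 2%nat | 3%nat => 3%nat | _ => 0%nat end.
Definition commR (l m : nat) : R :=
  if orb (lab l =? 0)%nat (orb (lab m =? 0)%nat (lab l =? lab m)%nat) then 1 else -1.

Lemma q_comm l m x y : qmul (pauli1 l) (pauli1 m) x y =
  Cmul (RtoC (commR l m)) (qmul (pauli1 m) (pauli1 l) x y).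
Proof.
  destruct l as [|[|[|[|l]]]], m as [|[|[|[|m]]]], x, y;
  unfold qmul, commR, lab; simpl; Ceq.
Qed.

Lemma q_sq l x y : qmul (pauli1 l) (pauli1 l) x y = qdelta x y.
Proof. destruct l as [|[|[|[|l]]]], x, y; unfold qmul, qdelta; simpl; Ceq. Qed.

Lemma q_herm l x y : Cconj (pauli1 l y x) = pauli1 l x y.
Proof. destruct l as [|[|[|[|l]]]], x, y; simpl; Ceq. Qed.

Definition dd (N : nat) : nat := (2 ^ N)%nat.

Lemma pauli_comm N s t a b :
  mx_mul (2^N) (pauli_string N s) (pauli_string N t) a b =
  Cmul (cprod (fun k => RtoC (commR (s k) (t k))) N)
       (mx_mul (2^N) (pauli_string N t) (pauli_string N s) a b).
Proof.
  rewrite !pauli_tens, !tens_mul. unfold tens. rewrite <- cprod_mul.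
  apply cprod_ext; intros. apply q_comm.
Qed.

Lemma pauli_sq N s a b : (a < 2^N)%nat -> (b < 2^N)%nat ->
  mx_mul (2^N) (pauli_string N s) (pauli_string N s) a b = mx_id a b.
Proof.
  intros. rewrite pauli_tens, tens_mul. rewrite <- (tens_delta N) by auto.
  unfold tens. apply cprod_ext; intros. apply q_sq.
Qed.

Lemma pauli_herm N s a b : mx_adj (pauli_string N s) a b = pauli_string N s a b.
Proof.
  unfold mx_adj, pauli_string. rewrite <- cprod_conj. apply cprod_ext; intros. apply q_herm.
Qed.

Definition jq (p : nat) : nat := ((p - 1) / 2)%nat.
Definition mlab (p k : nat) : nat :=
  if Nat.ltb k (jq p) then 3%nat
  else if Nat.eqb k (jq p) then (if Nat.odd p then 1%nat else 2%nat) else 0%nat.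

Lemma majorana_eq N p : majorana N p = pauli_string N (mlab p).
Proof. reflexivity. Qed.

Lemma par_cases p : (1 <= p)%nat ->
  (Nat.odd p = true /\ p = (2 * jq p + 1)%nat) \/ (Nat.odd p = false /\ p = (2 * jq p + 2)%nat).
Proof.
  intros. unfold jq. destruct (Nat.Even_or_Odd p) as [[m Hm]|[m Hm]]; subst.
  - right. assert (m >= 1)%nat by lia.
    replace (2*m-1)%nat with (2*(m-1)+1)%nat by lia.
    rewrite <- (Nat.div_unique (2*(m-1)+1) 2 (m-1) 1) by lia. split; [|lia].
    apply Nat.odd_even.
  - left. replace (2*m+1-1)%nat with (2*m+0)%nat by lia.
    rewrite <- (Nat.div_unique (2*m+0) 2 m 0) by lia. split; [|lia].
    apply Nat.odd_odd.
Qed.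

Lemma jq_lt N p : (1 <= p <= 2 * N)%nat -> (jq p < N)%nat.
Proof. intros. destruct (par_cases p) as [[_ E]|[_ E]]; lia. Qed.

Ltac mlab_cases p q k :=
  let Hp := fresh "Hp" in let Ep := fresh "Ep" in let Hq := fresh "Hq" in let Eq := fresh "Eq" in
  destruct (par_cases p) as [[Hp Ep]|[Hp Ep]]; [lia|lia|];
  destruct (par_cases q) as [[Hq Eq]|[Hq Eq]]; [lia|lia|];
  unfold mlab; rewrite ?Hp, ?Hq;
  destruct (Nat.ltb_spec k (jq p)); destruct (Nat.eqb_spec k (jq p));
  destruct (Nat.ltb_spec k (jq q)); destruct (Nat.eqb_spec k (jq q)).

Lemma commR_maj p q k : (1 <= p)%nat -> (1 <= q)%nat -> p <> q ->
  commR (mlab p k) (mlab q k) = if (k =? Nat.min (jq p) (jq q))%nat then -1 else 1.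
Proof.
  intros.
  destruct (par_cases p) as [[Hp Ep]|[Hp Ep]]; auto;
  destruct (par_cases q) as [[Hq Eq]|[Hq Eq]]; auto;
  unfold mlab; rewrite ?Hp, ?Hq;
  destruct (Nat.ltb_spec k (jq p)); destruct (Nat.eqb_spec k (jq p));
  destruct (Nat.ltb_spec k (jq q)); destruct (Nat.eqb_spec k (jq q));
  destruct (Nat.eqb_spec k (Nat.min (jq p) (jq q))); try lia;
  unfold commR; simpl; auto.
Qed.

Lemma maj_anticomm N p q a b : (1 <= p <= 2 * N)%nat -> (1 <= q <= 2 * N)%nat -> p <> q ->
  mx_mul (2^N) (majorana N p) (majorana N q) a b = Copp (mx_mul (2^N) (majorana N q) (majorana N p) a b).
Proof.
  intros. rewrite !majorana_eq, pauli_comm.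
  rewrite (cprod_single _ _ (Nat.min (jq p) (jq q))).
  - rewrite commR_maj, Nat.eqb_refl by lia. Ceq.
  - pose proof (jq_lt N p H); lia.
  - intros. rewrite commR_maj by lia. destruct (Nat.eqb_spec k (Nat.min (jq p) (jq q))); try lia. Ceq.
Qed.

Lemma maj_sq N p a b : (a < 2^N)%nat -> (b < 2^N)%nat ->
  mx_mul (2^N) (majorana N p) (majorana N p) a b = mx_id a b.
Proof. intros; rewrite majorana_eq; apply pauli_sq; auto. Qed.

Lemma maj_herm N p a b : mx_adj (majorana N p) a b = majorana N p a b.
Proof. rewrite majorana_eq; apply pauli_herm. Qed.

Definition Xop (N k : nat) : Mx := pauli_string N (fun j => if (j =? k)%nat then 1%nat else 0%nat).
Definition Zop (N k : nat) : Mx := pauli_string N (fun j => if (j =? k)%nat then 3%nat else 0%nat).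

Lemma maj_X N p k a b : (k < N)%nat ->
  mx_mul (2^N) (majorana N p) (Xop N k) a b =
  Cmul (RtoC (commR (mlab p k) 1)) (mx_mul (2^N) (Xop N k) (majorana N p) a b).
Proof.
  intros. unfold Xop. rewrite majorana_eq, pauli_comm.
  rewrite (cprod_single _ _ k); auto.
  rewrite Nat.eqb_refl; auto.
  intros. destruct (Nat.eqb_spec k0 k); try lia. unfold commR. simpl.
  rewrite Bool.orb_true_r. Ceq.
Qed.

Lemma maj_Z N p k a b : (k < N)%nat ->
  mx_mul (2^N) (majorana N p) (Zop N k) a b =
  Cmul (RtoC (commR (mlab p k) 3)) (mx_mul (2^N) (Zop N k) (majorana N p) a b).
Proof.
  intros. unfold Zop. rewrite majorana_eq, pauli_comm.
  rewrite (cprod_single _ _ k); auto.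
  rewrite Nat.eqb_refl; auto.
  intros. destruct (Nat.eqb_spec k0 k); try lia. unfold commR. simpl.
  rewrite Bool.orb_true_r. Ceq.
Qed.

Lemma pair_X_sign p q k : (1 <= p)%nat -> (1 <= q)%nat ->
  ((k < jq p)%nat /\ (k < jq q)%nat) \/ ((jq p < k)%nat /\ (jq q < k)%nat) ->
  commR (mlab q k) 1 * commR (mlab p k) 1 = 1 /\ commR (mlab q k) 3 * commR (mlab p k) 3 = 1.
Proof.
  intros.
  destruct (par_cases p) as [[Hp Ep]|[Hp Ep]]; auto;
  destruct (par_cases q) as [[Hq Eq]|[Hq Eq]]; auto;
  unfold mlab; rewrite ?Hp, ?Hq;
  destruct (Nat.ltb_spec k (jq p)); destruct (Nat.eqb_spec k (jq p));
  destruct (Nat.ltb_spec k (jq q)); destruct (Nat.eqb_spec k (jq q)); try lia;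
  unfold commR; simpl; split; lra.
Qed.

Definition meq (d : nat) (A B : Mx) : Prop := forall i j, (i < d)%nat -> (j < d)%nat -> A i j = B i j.

Lemma mx_mul_assoc d A B C i j : mx_mul d (mx_mul d A B) C i j = mx_mul d A (mx_mul d B C) i j.
Proof.
  unfold mx_mul. rewrite (csum_ext _ (fun k => csum (fun l => Cmul (A i l) (Cmul (B l k) (C k j))) d)).
  rewrite csum_swap. apply csum_ext; intros. rewrite <- csum_mul_l. auto.
  intros. rewrite <- csum_mul_r. apply csum_ext; intros; ring.
Qed.

Lemma mx_mul_meq_r d A B B' i j : meq d B B' -> (j < d)%nat -> mx_mul d A B i j = mx_mul d A B' i j.
Proof. intros. unfold mx_mul. apply csum_ext; intros. rewrite H; auto. Qed.
Lemma mx_mul_meq_l d A A' B i j : meq d A A' -> (i < d)%nat -> mx_mul d A B i j = mx_mul d A' B i j.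
Proof. intros. unfold mx_mul. apply csum_ext; intros. rewrite H; auto. Qed.
Lemma mx_mul_scale_l d s A B i j : mx_mul d (mx_scale s A) B i j = Cmul s (mx_mul d A B i j).
Proof. unfold mx_mul, mx_scale. rewrite <- csum_mul_l. apply csum_ext; intros; ring. Qed.
Lemma mx_mul_scale_r d s A B i j : mx_mul d A (mx_scale s B) i j = Cmul s (mx_mul d A B i j).
Proof. unfold mx_mul, mx_scale. rewrite <- csum_mul_l. apply csum_ext; intros; ring. Qed.
Lemma mx_mul_id_l d A i j : (i < d)%nat -> mx_mul d mx_id A i j = A i j.
Proof.
  intros. unfold mx_mul. rewrite (csum_single _ _ i); auto.
  unfold mx_id; rewrite Nat.eqb_refl; ring.
  intros. unfold mx_id. destruct (Nat.eqb_spec i k); try lia. ring.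
Qed.
Lemma mx_mul_id_r d A i j : (j < d)%nat -> mx_mul d A mx_id i j = A i j.
Proof.
  intros. unfold mx_mul. rewrite (csum_single _ _ j); auto.
  unfold mx_id; rewrite Nat.eqb_refl; ring.
  intros. unfold mx_id. destruct (Nat.eqb_spec k j); try lia. ring.
Qed.
Lemma mx_trace_comm d A B : mx_trace d (mx_mul d A B) = mx_trace d (mx_mul d B A).
Proof.
  unfold mx_trace, mx_mul. rewrite csum_swap. apply csum_ext; intros. apply csum_ext; intros; ring.
Qed.
Lemma mx_trace_meq d A B : meq d A B -> mx_trace d A = mx_trace d B.
Proof. intros. unfold mx_trace. apply csum_ext; intros; auto. Qed.

Fixpoint toggle (p : nat) (l : list nat) : list nat :=
  match l with
  | [] => [p]
  | x :: l' => if (p <? x)%nat then p :: l else if (p =? x)%nat then l' else x :: toggle p l'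
  end.

Definition inrange N (l : list nat) := Forall (fun p => (1 <= p <= 2 * N)%nat) l.

Lemma maj_mono_toggle N p l : (1 <= p <= 2 * N)%nat -> inrange N l ->
  exists s, (s = C1 \/ s = Copp C1) /\
  meq (2^N) (mx_mul (2^N) (majorana N p) (monomial N l)) (mx_scale s (monomial N (toggle p l))).
Proof.
  intros Hp Hl. induction l as [|x l IH]; simpl.
  - exists C1; split; auto. intros i j _ _. unfold mx_scale. ring.
  - inversion Hl; subst. destruct (Nat.ltb_spec p x).
    + exists C1; split; auto. intros i j _ _. unfold mx_scale; simpl. ring.
    + destruct (Nat.eqb_spec p x).
      * subst. exists C1; split; auto. intros i j Hi Hj. unfold mx_scale.
        rewrite <- mx_mul_assoc. rewrite (mx_mul_meq_l _ _ mx_id) by (auto; intros a b Ha Hb; apply maj_sq; auto).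
        rewrite mx_mul_id_l by auto. ring.
      * destruct (IH H2) as [s [Hs E]]. exists (Copp s); split.
        { destruct Hs; subst; [right; auto|left; ring]. }
        intros i j Hi Hj. simpl. unfold mx_scale.
        rewrite <- mx_mul_assoc.
        assert (E2: forall a b, mx_mul (2^N) (majorana N p) (majorana N x) a b =
                   mx_scale (Copp C1) (mx_mul (2^N) (majorana N x) (majorana N p)) a b).
        { intros. unfold mx_scale. rewrite maj_anticomm by (auto; lia). ring. }
        rewrite (mx_mul_meq_l _ _ (mx_scale (Copp C1) (mx_mul (2^N) (majorana N x) (majorana N p))))
          by (auto; intros a b _ _; apply E2).
        rewrite mx_mul_scale_l, mx_mul_assoc.
        rewrite (mx_mul_meq_r _ _ _ (mx_scale s (monomial N (toggle p l)))) by auto.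
        rewrite mx_mul_scale_r. ring.
Qed.

Definition sgR (p : nat) (l : list nat) : R :=
  fold_right (fun x acc => (if (x =? p)%nat then 1 else -1) * acc) 1 l.

Lemma maj_mono_comm N p l : (1 <= p <= 2 * N)%nat -> inrange N l ->
  meq (2^N) (mx_mul (2^N) (majorana N p) (monomial N l))
            (mx_scale (RtoC (sgR p l)) (mx_mul (2^N) (monomial N l) (majorana N p))).
Proof.
  intros Hp Hl. induction l as [|x l IH]; simpl; intros i j Hi Hj.
  - unfold mx_scale. rewrite mx_mul_id_l, mx_mul_id_r by auto. Ceq.
  - inversion Hl; subst. unfold mx_scale.
    rewrite <- mx_mul_assoc.
    assert (E2: forall a b, mx_mul (2^N) (majorana N p) (majorana N x) a b =
               mx_scale (RtoC (if (x =? p)%nat then 1 else -1)) (mx_mul (2^N) (majorana N x) (majorana N p)) a b).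
    { intros. unfold mx_scale. destruct (Nat.eqb_spec x p). subst. Ceq.
      rewrite maj_anticomm by (auto; lia). Ceq. }
    rewrite (mx_mul_meq_l _ _ (mx_scale _ (mx_mul (2^N) (majorana N x) (majorana N p))))
          by (auto; intros a b _ _; apply E2).
    rewrite mx_mul_scale_l, mx_mul_assoc.
    rewrite (mx_mul_meq_r _ _ _ _ _ _ (IH H2)) by auto.
    rewrite mx_mul_scale_r. rewrite <- mx_mul_assoc. rewrite RtoC_mul. ring.
Qed.

Lemma trace_zero_of_anti N p A : (1 <= p <= 2 * N)%nat ->
  meq (2^N) (mx_mul (2^N) (majorana N p) A) (mx_scale (Copp C1) (mx_mul (2^N) A (majorana N p))) ->
  mx_trace (2^N) A = C0.
Proof.
  intros Hp H.
  assert (T1: mx_trace (2^N) (mx_mul (2^N) (majorana N p) (mx_mul (2^N) A (majorana N p))) = mx_trace (2^N) A).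
  { rewrite mx_trace_comm. apply mx_trace_meq. intros i j Hi Hj.
    rewrite mx_mul_assoc. rewrite (mx_mul_meq_r _ _ _ mx_id) by (auto; intros a b Ha Hb; apply maj_sq; auto).
    apply mx_mul_id_r; auto. }
  assert (T2: mx_trace (2^N) (mx_mul (2^N) (majorana N p) (mx_mul (2^N) A (majorana N p))) = Copp (mx_trace (2^N) A)).
  { unfold mx_trace at 2. rewrite <- csum_opp. unfold mx_trace. apply csum_ext. intros k Hk.
    rewrite <- mx_mul_assoc. rewrite (mx_mul_meq_l _ _ _ _ _ _ H) by auto.
    rewrite mx_mul_scale_l, mx_mul_assoc.
    rewrite (mx_mul_meq_r _ _ _ mx_id) by (auto; intros a b Ha Hb; apply maj_sq; auto).
    rewrite mx_mul_id_r by auto. ring. }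
  rewrite T1 in T2. set (t := mx_trace (2^N) A) in *.
  apply C_ext; destruct t; simpl; injection T2; intros; lra.
Qed.

Lemma pow_m1 n : (-1)^n = if Nat.even n then 1 else -1.
Proof.
  induction n. simpl; auto. rewrite Nat.even_succ, <- Nat.negb_even. simpl pow. rewrite IHn.
  destruct (Nat.even n); simpl; lra.
Qed.

Lemma sgR_formula p l : NoDup l ->
  sgR p l = (-1)^(length l) * (if in_dec Nat.eq_dec p l then -1 else 1).
Proof.
  induction l as [|x l IH]; intros H. simpl. lra.
  inversion H; subst. change (sgR p (x :: l)) with ((if (x =? p)%nat then 1 else -1) * sgR p l). rewrite IH by auto.
  change (length (x :: l)) with (S (length l)). rewrite <- tech_pow_Rmult.
  destruct (Nat.eqb_spec x p).
  - subst. destruct (in_dec Nat.eq_dec p l); try tauto.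
    destruct (in_dec Nat.eq_dec p (p :: l)). lra. exfalso; apply n0; left; auto.
  - destruct (in_dec Nat.eq_dec p l); destruct (in_dec Nat.eq_dec p (x :: l)).
    lra. exfalso; apply n0; right; auto. destruct i; [congruence|tauto]. lra.
Qed.

Lemma trace_mono_zero N l : NoDup l -> inrange N l -> l <> [] ->
  mx_trace (2^N) (monomial N l) = C0.
Proof.
  intros Hnd Hr Hne.
  assert (exists p, (1 <= p <= 2 * N)%nat /\ sgR p l = -1) as [p [Hp Hs]].
  { destruct (Nat.even (length l)) eqn:Ev.
    - destruct l as [|x l']; [congruence|]. exists x. inversion Hr; subst. split; auto.
      rewrite sgR_formula by auto. rewrite pow_m1, Ev.
      destruct (in_dec Nat.eq_dec x (x :: l')). lra. exfalso; apply n; left; auto.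
    - destruct (Classical_Prop.classic (exists p, (1 <= p <= 2 * N)%nat /\ ~ In p l)) as [[p [Hp Hn]]|Hc].
      + exists p; split; auto. rewrite sgR_formula by auto. rewrite pow_m1, Ev.
        destruct (in_dec Nat.eq_dec p l); try tauto. lra.
      + exfalso. assert (incl (seq 1 (2*N)) l).
        { intros y Hy. apply in_seq in Hy. destruct (Classical_Prop.classic (In y l)); auto.
          exfalso; apply Hc; exists y; split; auto; lia. }
        assert (incl l (seq 1 (2*N))).
        { intros y Hy. apply in_seq. unfold inrange in Hr; rewrite Forall_forall in Hr. specialize (Hr y Hy). lia. }
        apply NoDup_incl_length in H; [|apply seq_NoDup].
        apply NoDup_incl_length in H0; auto. rewrite length_seq in *.
        assert (length l = 2 * N)%nat by lia. rewrite H1 in Ev.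
        rewrite Nat.even_mul in Ev. simpl in Ev. congruence. }
  apply (trace_zero_of_anti N p); auto.
  intros i j Hi Hj. rewrite (maj_mono_comm N p l Hp Hr i j Hi Hj). rewrite Hs. unfold mx_scale. f_equal. Ceq.
Qed.

Definition list_of (N m : nat) : list nat := filter (fun p => Nat.testbit m (p - 1)) (seq 1 (2 * N)).

Lemma in_list_of N m x : In x (list_of N m) <-> ((1 <= x <= 2 * N)%nat /\ Nat.testbit m (x - 1) = true).
Proof. unfold list_of. rewrite filter_In, in_seq. split; intros [A B]; split; auto; lia. Qed.

Lemma SS_seq a n : StronglySorted lt (seq a n).
Proof.
  revert a; induction n; intros; simpl; constructor; auto.
  apply Forall_forall. intros x Hx. apply in_seq in Hx. lia.
Qed.

Lemma SS_filter (f : nat -> bool) l : StronglySorted lt l -> StronglySorted lt (filter f l).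
Proof.
  induction l; intros H; simpl; auto. inversion H; subst.
  destruct (f a); auto. constructor; auto.
  rewrite Forall_forall in *. intros x Hx. apply filter_In in Hx. apply H3; tauto.
Qed.

Lemma list_of_SS N m : StronglySorted lt (list_of N m).
Proof. apply SS_filter, SS_seq. Qed.
Lemma list_of_NoDup N m : NoDup (list_of N m).
Proof. apply NoDup_filter, seq_NoDup. Qed.
Lemma list_of_inrange N m : inrange N (list_of N m).
Proof. unfold inrange. apply Forall_forall. intros x Hx. apply in_list_of in Hx. tauto. Qed.

Lemma toggle_spec p l : StronglySorted lt l ->
  StronglySorted lt (toggle p l) /\
  (forall x, In x (toggle p l) <-> (x = p /\ ~ In p l) \/ (x <> p /\ In x l)).
Proof.
  induction l as [|y l IH]; intros H.
  - simpl. split. constructor; constructor. intros x; split; intros.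
    destruct H0 as [H0|[]]; subst; left; auto. destruct H0 as [[A _]|[_ []]]; left; auto.
  - inversion H; subst. rewrite Forall_forall in H3. simpl.
    destruct (Nat.ltb_spec p y).
    + split. constructor; auto. apply Forall_forall. intros z Hz. destruct Hz; subst; auto.
      specialize (H3 z H1); lia.
      intros x; split; intros.
      * destruct H1 as [H1|H1]. subst. left; split; auto. intros [E|E]; [lia|]. specialize (H3 _ E); lia.
        right. split; auto. intro; subst. destruct H1 as [E|E]; [lia|]. specialize (H3 _ E); lia.
      * destruct H1 as [[A B]|[A B]]. left; auto. right; auto.
    + destruct (Nat.eqb_spec p y).
      * subst. split; auto. intros x; split; intros.
        right. split. intro; subst. specialize (H3 _ H1); lia. right; auto.
        destruct H1 as [[A B]|[A [B|B]]]. exfalso; apply B; left; auto. congruence. auto.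
      * destruct (IH H2) as [S1 S2]. split.
        constructor; auto. apply Forall_forall. intros z Hz. apply S2 in Hz.
        destruct Hz as [[A _]|[_ A]]; subst; try lia. apply H3; auto.
        intros x. simpl. rewrite S2. split; intros.
        -- destruct H1 as [H1|[[A B]|[A B]]]. subst. right; split; auto.
           left; split; auto. intros [E|E]; auto.
           right; split; auto.
        -- destruct H1 as [[A B]|[A [B|B]]]. right; left; split; auto.
           left; auto. right; right; auto.
Qed.

Lemma SS_unique (l1 l2 : list nat) : StronglySorted lt l1 -> StronglySorted lt l2 ->
  (forall x, In x l1 <-> In x l2) -> l1 = l2.
Proof.
  revert l2; induction l1 as [|x l1 IH]; intros l2 H1 H2 E.
  - destruct l2 as [|y l2]; auto. exfalso. apply (E y); left; auto.
  - destruct l2 as [|y l2]. exfalso. apply (E x); left; auto.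
    inversion H1; subst. inversion H2; subst. rewrite Forall_forall in *.
    assert (x = y).
    { destruct (E x) as [A _]. destruct (A (or_introl eq_refl)) as [B|B]; auto.
      destruct (E y) as [_ C]. destruct (C (or_introl eq_refl)) as [D|D]; auto.
      specialize (H6 _ B). specialize (H4 _ D). lia. }
    subst. f_equal. apply IH; auto. intros z. split; intros.
    destruct (E z) as [A _]. destruct (A (or_intror H)); auto. subst. specialize (H4 _ H); lia.
    destruct (E z) as [_ A]. destruct (A (or_intror H)); auto. subst. specialize (H6 _ H); lia.
Qed.

Lemma toggle_list_of N m p : (1 <= p <= 2 * N)%nat ->
  toggle p (list_of N m) = list_of N (Nat.lxor m (2 ^ (p - 1))).
Proof.
  intros Hp. destruct (toggle_spec p (list_of N m) (list_of_SS N m)) as [S1 S2].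
  apply SS_unique; auto. apply list_of_SS.
  intros x. rewrite S2, !in_list_of. rewrite Nat.lxor_spec, Nat.pow2_bits_eqb.
  split; intros.
  - destruct H as [[A B]|[A [B C]]].
    + subst. split; auto. rewrite Nat.eqb_refl. destruct (Nat.testbit m (p-1)); auto; exfalso; apply B; auto.
    + split; auto. rewrite C. destruct (Nat.eqb_spec (p-1) (x-1)); auto; lia.
  - destruct H as [A B]. destruct (Nat.eq_dec x p).
    + subst. left; split; auto. rewrite Nat.eqb_refl in B. intros [_ C]; rewrite C in B; discriminate.
    + right; split; auto. split; auto. destruct (Nat.eqb_spec (p-1) (x-1)); try lia.
      destruct (Nat.testbit m (x-1)); auto.
Qed.

Lemma list_of_nil N m : (m < 2 ^ (2 * N))%nat -> list_of N m = [] -> m = 0%nat.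
Proof.
  intros Hm E. apply (bits_eq m 0 (2*N)); auto. apply Nat.neq_0_lt_0, Nat.pow_nonzero; lia.
  intros n Hn. rewrite Nat.bits_0. destruct (Nat.testbit m n) eqn:B; auto.
  assert (In (S n) (list_of N m)). apply in_list_of. split. lia. simpl. rewrite Nat.sub_0_r; auto.
  rewrite E in H; destruct H.
Qed.

Lemma list_of_0 N : list_of N 0 = [].
Proof.
  unfold list_of. induction (seq 1 (2*N)); simpl; auto. rewrite Nat.bits_0; auto.
Qed.

Lemma mask_exists n (P : nat -> bool) : exists m, (m < 2^n)%nat /\ forall i, (i < n)%nat -> Nat.testbit m i = P i.
Proof.
  induction n.
  - exists 0%nat; split. simpl; lia. intros; lia.
  - destruct IHn as [m [Hm Hb]]. destruct (P n) eqn:Pn.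
    + exists (2^n + m)%nat. split. simpl; lia. intros i Hi.
      destruct (Nat.eq_dec i n). subst. rewrite bit_add_pow_top; auto.
      rewrite bit_add_pow by (auto; lia). apply Hb; lia.
    + exists m. split. simpl; lia. intros i Hi.
      destruct (Nat.eq_dec i n). subst. rewrite (bit_high m n n); auto.
      apply Hb; lia.
Qed.

Lemma ps_mask N ps : monomial_index N ps -> exists m, (m < 2^(2*N))%nat /\ list_of N m = ps.
Proof.
  intros [Hs Hr].
  destruct (mask_exists (2*N) (fun i => if in_dec Nat.eq_dec (S i) ps then true else false)) as [m [Hm Hb]].
  exists m; split; auto. apply SS_unique. apply list_of_SS.
  apply Sorted_StronglySorted; auto. intros a b c; lia.
  intros x. rewrite in_list_of. rewrite Forall_forall in Hr. split.
  - intros [A B]. rewrite Hb in B by lia. replace (S (x-1)) with x in B by lia.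
    destruct (in_dec Nat.eq_dec x ps); auto; discriminate.
  - intros H. specialize (Hr x H). split; auto. rewrite Hb by lia. replace (S (x-1)) with x by lia.
    destruct (in_dec Nat.eq_dec x ps); auto.
Qed.

Definition mono N m := monomial N (list_of N m).
Definition tau p q m := Nat.lxor (Nat.lxor m (2 ^ (p - 1))) (2 ^ (q - 1)).

Lemma tau_invol p q m : tau p q (tau p q m) = m.
Proof.
  unfold tau. apply Nat.bits_inj; intro n. rewrite !Nat.lxor_spec.
  destruct (Nat.testbit m n), (Nat.testbit (2^(p-1)) n), (Nat.testbit (2^(q-1)) n); auto.
Qed.

Lemma tau_lt N p q m : (1 <= p <= 2 * N)%nat -> (1 <= q <= 2 * N)%nat -> (m < 2^(2*N))%nat ->
  (tau p q m < 2^(2*N))%nat.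
Proof.
  intros. unfold tau. repeat apply xor_lt; auto; apply pow2_lt; lia.
Qed.

Lemma meq_sym d A B : meq d A B -> meq d B A.
Proof. intros H i j Hi Hj; rewrite H; auto. Qed.

Lemma pair_action N p q m : (1 <= p <= 2 * N)%nat -> (1 <= q <= 2 * N)%nat ->
  exists s, (s = C1 \/ s = Copp C1) /\
  meq (2^N) (mx_mul (2^N) (majorana N q) (mx_mul (2^N) (majorana N p) (mono N m)))
            (mx_scale s (mono N (tau p q m))).
Proof.
  intros Hp Hq. unfold mono.
  destruct (maj_mono_toggle N p (list_of N m) Hp (list_of_inrange N m)) as [s1 [Hs1 E1]].
  rewrite toggle_list_of in E1 by auto.
  destruct (maj_mono_toggle N q (list_of N (Nat.lxor m (2 ^ (p - 1)))) Hq (list_of_inrange _ _)) as [s2 [Hs2 E2]].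
  rewrite toggle_list_of in E2 by auto.
  exists (Cmul s1 s2). split.
  { destruct Hs1, Hs2; subst; [left|right|right|left]; ring. }
  intros i j Hi Hj. rewrite (mx_mul_meq_r _ _ _ _ _ _ E1) by auto.
  rewrite mx_mul_scale_r, E2 by auto. unfold mx_scale, tau. ring.
Qed.

Lemma Xop_entry N k c b : (k < N)%nat -> (c < 2^N)%nat -> (b < 2^N)%nat ->
  Xop N k c b = mx_id c (Nat.lxor b (2^k)).
Proof.
  intros. unfold Xop. rewrite pauli_tens. rewrite <- (tens_delta N) by (auto; apply xor_lt; auto; apply pow2_lt; auto).
  unfold tens. apply cprod_ext; intros j Hj. rewrite Nat.lxor_spec, Nat.pow2_bits_eqb.
  rewrite (Nat.eqb_sym k j). destruct (Nat.eqb_spec j k); unfold qdelta;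
  destruct (Nat.testbit c j), (Nat.testbit b j); simpl; auto.
Qed.

Definition zs (k b : nat) : C := if Nat.testbit b k then Copp C1 else C1.

Lemma Zop_entry N k c b : (k < N)%nat -> (c < 2^N)%nat -> (b < 2^N)%nat ->
  Zop N k c b = Cmul (mx_id c b) (zs k b).
Proof.
  intros. unfold Zop. rewrite pauli_tens. rewrite <- (tens_delta N) by auto.
  assert (Hz: cprod (fun j => if (j =? k)%nat then zs k b else C1) N = zs k b).
  { rewrite (cprod_single _ _ k); auto. rewrite Nat.eqb_refl; auto.
    intros. destruct (Nat.eqb_spec k0 k); auto; lia. }
  unfold tens. rewrite <- Hz.
  rewrite <- cprod_mul. apply cprod_ext; intros j Hj.
  unfold zs. destruct (Nat.eqb_spec j k) as [->|]; unfold qdelta;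
  [destruct (Nat.testbit c k) eqn:E1, (Nat.testbit b k) eqn:E2
  |destruct (Nat.testbit c j) eqn:E1, (Nat.testbit b j) eqn:E2]; simpl; Ceq.
Qed.

Definition comm_at N k M :=
  meq (2^N) (mx_mul (2^N) M (Xop N k)) (mx_mul (2^N) (Xop N k) M) /\
  meq (2^N) (mx_mul (2^N) M (Zop N k)) (mx_mul (2^N) (Zop N k) M).

Lemma comm_trivial N k M : (k < N)%nat -> comm_at N k M -> acts_trivially_on N k M.
Proof.
  intros Hk [HX HZ] a b Ha Hb.
  assert (Hxa : (Nat.lxor a (2^k) < 2^N)%nat) by (apply xor_lt; auto; apply pow2_lt; auto).
  assert (Hxb : (Nat.lxor b (2^k) < 2^N)%nat) by (apply xor_lt; auto; apply pow2_lt; auto).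
  split.
  - intros Hd. specialize (HZ a b Ha Hb). unfold mx_mul in HZ.
    rewrite (csum_single _ _ b) in HZ by (auto; intros c Hc Hcb; rewrite Zop_entry by auto;
      unfold mx_id; destruct (Nat.eqb_spec c b); try lia; ring).
    rewrite (csum_single _ _ a) in HZ by (auto; intros c Hc Hcb; rewrite Zop_entry by auto;
      unfold mx_id; destruct (Nat.eqb_spec a c); try lia; ring).
    rewrite !Zop_entry in HZ by auto. unfold mx_id in HZ. rewrite !Nat.eqb_refl in HZ.
    unfold zs in HZ. destruct (Nat.testbit a k), (Nat.testbit b k); try congruence;
    destruct (M a b); apply C_ext; simpl; injection HZ; intros; simpl in *; lra.
  - specialize (HX a (Nat.lxor b (2^k)) Ha Hxb). unfold mx_mul in HX.
    rewrite (csum_single _ _ b) in HX.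
    2: auto.
    2:{ intros c Hc Hcb. rewrite Xop_entry by auto. rewrite xor_invol. unfold mx_id.
        destruct (Nat.eqb_spec c b); try lia; ring. }
    rewrite (csum_single _ _ (Nat.lxor a (2^k))) in HX.
    2: auto.
    2:{ intros c Hc Hcb. rewrite Xop_entry by auto. unfold mx_id.
        destruct (Nat.eqb_spec a (Nat.lxor c (2^k))); try ring. exfalso; apply Hcb; subst; rewrite xor_invol; auto. }
    rewrite !Xop_entry in HX by auto. rewrite xor_invol in HX. unfold mx_id in HX.
    rewrite Nat.eqb_refl in HX. rewrite xor_invol in HX. rewrite Nat.eqb_refl in HX.
    replace (M a b) with (Cmul (M a b) C1) by ring. rewrite HX. ring.
Qed.

Definition SC N (X : Mx) (s : C) (A : Mx) :=
  forall i j, (i < 2^N)%nat -> (j < 2^N)%nat -> mx_mul (2^N) A X i j = Cmul s (mx_mul (2^N) X A i j).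

Lemma SC_mul N X s t A B : SC N X s A -> SC N X t B -> SC N X (Cmul s t) (mx_mul (2^N) A B).
Proof.
  intros HA HB i j Hi Hj.
  rewrite mx_mul_assoc. rewrite (mx_mul_meq_r _ _ _ (mx_scale t (mx_mul (2^N) X B))) by (auto; intros a b Ha Hb; apply HB; auto).
  rewrite mx_mul_scale_r, <- mx_mul_assoc.
  rewrite (mx_mul_meq_l _ _ (mx_scale s (mx_mul (2^N) X A))) by (auto; intros a b Ha Hb; apply HA; auto).
  rewrite mx_mul_scale_l, mx_mul_assoc. ring.
Qed.

Lemma SC_meq N X s A A' : meq (2^N) A A' -> SC N X s A -> SC N X s A'.
Proof.
  intros E H i j Hi Hj. rewrite <- (mx_mul_meq_l _ _ _ _ _ _ E) by auto.
  rewrite <- (mx_mul_meq_r _ _ _ _ _ _ E) by auto. apply H; auto.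
Qed.

Lemma SC_scale N X s c A : SC N X s A -> SC N X s (mx_scale c A).
Proof.
  intros H i j Hi Hj. rewrite mx_mul_scale_l, mx_mul_scale_r, H by auto. ring.
Qed.

Lemma comm_at_SC N k M : comm_at N k M <-> SC N (Xop N k) C1 M /\ SC N (Zop N k) C1 M.
Proof.
  unfold comm_at, SC, meq. split; intros [A B]; split; intros i j Hi Hj;
  [rewrite A| rewrite B| rewrite A| rewrite B]; auto; ring.
Qed.

Lemma comm_pair N p q k M : (1 <= p <= 2 * N)%nat -> (1 <= q <= 2 * N)%nat -> (k < N)%nat ->
  ((k < jq p)%nat /\ (k < jq q)%nat) \/ ((jq p < k)%nat /\ (jq q < k)%nat) ->
  comm_at N k M -> comm_at N k (mx_mul (2^N) (majorana N q) (mx_mul (2^N) (majorana N p) M)).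
Proof.
  intros Hp Hq Hk Hout HM. apply comm_at_SC in HM. destruct HM as [HX HZ].
  destruct (pair_X_sign p q k) as [SX SZ]; try lia; auto.
  assert (EX: Cmul (RtoC (commR (mlab q k) 1)) (Cmul (RtoC (commR (mlab p k) 1)) C1) = C1).
  { apply C_ext; simpl; nra. }
  assert (EZ: Cmul (RtoC (commR (mlab q k) 3)) (Cmul (RtoC (commR (mlab p k) 3)) C1) = C1).
  { apply C_ext; simpl; nra. }
  apply comm_at_SC. split.
  - rewrite <- EX. apply SC_mul. intros i j _ _; apply maj_X; auto.
    apply SC_mul; auto. intros i j _ _; apply maj_X; auto.
  - rewrite <- EZ. apply SC_mul. intros i j _ _; apply maj_Z; auto.
    apply SC_mul; auto. intros i j _ _; apply maj_Z; auto.
Qed.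

Lemma comm_mono_tau N p q k m : (1 <= p <= 2 * N)%nat -> (1 <= q <= 2 * N)%nat -> (k < N)%nat ->
  ((k < jq p)%nat /\ (k < jq q)%nat) \/ ((jq p < k)%nat /\ (jq q < k)%nat) ->
  comm_at N k (mono N m) -> comm_at N k (mono N (tau p q m)).
Proof.
  intros Hp Hq Hk Hout H.
  destruct (pair_action N p q m Hp Hq) as [s [Hs E]].
  pose proof (comm_pair N p q k (mono N m) Hp Hq Hk Hout H) as H2.
  apply comm_at_SC in H2. destruct H2 as [A B].
  assert (E2: meq (2^N) (mx_scale s (mx_mul (2 ^ N) (majorana N q) (mx_mul (2 ^ N) (majorana N p) (mono N m))))
                        (mono N (tau p q m))).
  { intros i j Hi Hj. unfold mx_scale. rewrite E by auto. unfold mx_scale.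
    destruct Hs; subst; ring. }
  apply comm_at_SC. split; eapply SC_meq; eauto; apply SC_scale; auto.
Qed.

Lemma bool_of_true P : bool_of P = true <-> P.
Proof. unfold bool_of. destruct (excluded_middle_informative P); split; intros; auto; try discriminate; tauto. Qed.

Lemma filter_mono (f g : nat -> bool) l : (forall x, In x l -> f x = true -> g x = true) ->
  (length (filter f l) <= length (filter g l))%nat.
Proof.
  induction l; intros H; simpl; auto.
  destruct (f a) eqn:Ef. rewrite (H a) by (auto; left; auto). simpl.
  apply le_n_S, IHl; intros; apply H; auto; right; auto.
  destruct (g a); simpl; [apply le_S|]; apply IHl; intros; apply H; auto; right; auto.
Qed.

Lemma count3 (f g h : nat -> bool) l : (forall x, In x l -> f x = true -> g x = true \/ h x = true) ->
  (length (filter f l) <= length (filter g l) + length (filter h l))%nat.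
Proof.
  induction l; intros H; simpl; auto.
  assert (IH := IHl (fun x Hx => H x (or_intror Hx))).
  destruct (f a) eqn:Ef.
  - destruct (H a (or_introl eq_refl) Ef) as [G|G]; rewrite G; simpl;
    destruct (g a), (h a); simpl; lia.
  - destruct (g a), (h a); simpl; lia.
Qed.

Lemma count_or (g h : nat -> bool) l :
  (length (filter (fun x => orb (g x) (h x)) l) <= length (filter g l) + length (filter h l))%nat.
Proof. induction l; simpl; auto. destruct (g a), (h a); simpl; lia. Qed.

Lemma interval_count a b s n :
  (length (filter (fun k => andb (a <=? k) (k <=? b))%nat (seq s n)) <= b + 1 - Nat.max a s)%nat.
Proof.
  revert s; induction n; intros s; simpl. lia.
  specialize (IHn (S s)).
  destruct (Nat.leb_spec a s), (Nat.leb_spec s b); simpl; lia.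
Qed.

Definition nontriv N M k := negb (bool_of (comm_at N k M)).
Definition qw N M := length (filter (nontriv N M) (seq 0 N)).
Definition fw N m := length (list_of N m).

Lemma qubit_weight_le N M : (qubit_weight N M <= qw N M)%nat.
Proof.
  unfold qubit_weight, qw. apply filter_mono. intros k Hk H. apply in_seq in Hk.
  unfold nontriv. destruct (bool_of (comm_at N k M)) eqn:E; auto.
  apply (proj1 (bool_of_true _)) in E. apply comm_trivial in E; [|lia].
  apply (proj2 (bool_of_true _)) in E. rewrite E in H. discriminate.
Qed.

Definition span p q := (Nat.max (jq p) (jq q) + 1 - Nat.min (jq p) (jq q))%nat.

Lemma qw_tau N p q m : (1 <= p <= 2 * N)%nat -> (1 <= q <= 2 * N)%nat ->
  (qw N (mono N m) <= qw N (mono N (tau p q m)) + span p q)%nat.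
Proof.
  intros Hp Hq. unfold qw, span.
  eapply Nat.le_trans.
  apply (count3 _ (nontriv N (mono N (tau p q m))) (fun k => andb (Nat.min (jq p) (jq q) <=? k) (k <=? Nat.max (jq p) (jq q)))%nat).
  2:{ apply Nat.add_le_mono_l. eapply Nat.le_trans. apply interval_count. lia. }
  intros k Hk H. apply in_seq in Hk.
  destruct (Nat.leb_spec (Nat.min (jq p) (jq q)) k), (Nat.leb_spec k (Nat.max (jq p) (jq q))); simpl;
  try (right; reflexivity).
  all: left; unfold nontriv in *; destruct (bool_of (comm_at N k (mono N (tau p q m)))) eqn:E; auto;
    apply (proj1 (bool_of_true _)) in E; apply (comm_mono_tau N p q k) in E; try lia; rewrite tau_invol in E;
    apply (proj2 (bool_of_true _)) in E; rewrite E in H; discriminate.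
Qed.

Lemma fw_tau N p q m : (1 <= p <= 2 * N)%nat -> (1 <= q <= 2 * N)%nat ->
  (fw N m <= fw N (tau p q m) + 2)%nat.
Proof.
  intros Hp Hq. unfold fw, list_of.
  eapply Nat.le_trans.
  apply (count3 _ (fun p0 => Nat.testbit (tau p q m) (p0 - 1)) (fun x => orb (andb (p <=? x) (x <=? p)) (andb (q <=? x) (x <=? q)))%nat).
  2:{ apply Nat.add_le_mono_l. eapply Nat.le_trans. apply count_or.
      pose proof (interval_count p p 1 (2*N)). pose proof (interval_count q q 1 (2*N)). lia. }
  intros x Hx H. apply in_seq in Hx.
  destruct (Nat.eq_dec x p). subst. right. rewrite !Nat.leb_refl; auto.
  destruct (Nat.eq_dec x q). subst. right. rewrite !Nat.leb_refl, Bool.orb_true_r; auto.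
  left. unfold tau. rewrite !Nat.lxor_spec, !Nat.pow2_bits_eqb, H.
  destruct (Nat.eqb_spec (p-1) (x-1)); try lia. destruct (Nat.eqb_spec (q-1) (x-1)); try lia. auto.
Qed.

Lemma gron (G dG : R -> R) (K : R) : 0 <= K ->
  (forall t, 0 <= t <= 1 -> 0 <= G t) ->
  (forall u, 0 < u < 1 -> derivable_pt_lim G u (dG u) /\ dG u <= 2 * K * G u) ->
  limit1_in G (fun t => 0 <= t <= 1) (G 0) 0 ->
  limit1_in G (fun t => 0 <= t <= 1) (G 1) 1 ->
  G 1 <= exp (2 * K) * G 0.
Proof.
  intros HK Hpos HD L0 L1.
  set (H := fun t => G t * exp (- (2 * K) * t)).
  assert (HDH : forall u, 0 < u < 1 -> derivable_pt_lim H u ((dG u - 2 * K * G u) * exp (- (2 * K) * u))).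
  { intros u Hu. destruct (HD u Hu) as [D1 _].
    assert (De : derivable_pt_lim (fun t => exp (- (2 * K) * t)) u (exp (- (2 * K) * u) * (- (2 * K)))).
    { apply (derivable_pt_lim_comp (fun t => - (2 * K) * t) exp u (- (2*K)) (exp (- (2 * K) * u))).
      pose proof (derivable_pt_lim_scal id (- (2*K)) u 1 (derivable_pt_lim_id u)) as D0.
      unfold mult_real_fct, id in D0. rewrite Rmult_1_r in D0. exact D0.
      apply derivable_pt_lim_exp. }
    pose proof (derivable_pt_lim_mult _ _ _ _ _ D1 De) as Dm.
    replace ((dG u - 2 * K * G u) * exp (- (2 * K) * u)) with
      (dG u * exp (- (2 * K) * u) + G u * (exp (- (2 * K) * u) * - (2 * K))) by ring.
    exact Dm. }
  assert (Hmono : forall a b, 0 < a -> a < b -> b < 1 -> H b <= H a).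
  { intros a b Ha Hab Hb.
    assert (pr1 : forall c, a < c < b -> derivable_pt H c).
    { intros c Hc. exists ((dG c - 2 * K * G c) * exp (- (2 * K) * c)). apply HDH; lra. }
    assert (pr2 : forall c, a < c < b -> derivable_pt id c).
    { intros c Hc. exists 1. apply derivable_pt_lim_id. }
    destruct (MVT H id a b pr1 pr2 Hab) as [c [P E]].
    - intros c Hc. apply derivable_continuous_pt. exists ((dG c - 2 * K * G c) * exp (- (2 * K) * c)). apply HDH; lra.
    - intros c Hc. apply derivable_continuous_pt. exists 1. apply derivable_pt_lim_id.
    - rewrite (derive_pt_eq_0 H c _ (pr1 c P) (HDH c ltac:(lra))) in E.
      rewrite (derive_pt_eq_0 id c _ (pr2 c P) (derivable_pt_lim_id c)) in E.
      unfold id in E. destruct (HD c ltac:(lra)) as [_ Hle].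
      assert (0 < exp (- (2 * K) * c)) by apply exp_pos.
      assert ((dG c - 2 * K * G c) * exp (- (2 * K) * c) <= 0).
      { assert (dG c - 2 * K * G c <= 0) by lra. nra. }
      nra. }
  assert (Hab : forall a b, 0 < a -> a < b -> b < 1 -> G b <= exp (2 * K) * G a).
  { intros a b Ha Hab Hb. pose proof (Hmono a b Ha Hab Hb) as M. unfold H in M.
    assert (E1 : exp (- (2 * K) * b) * exp (2 * K * b) = 1).
    { rewrite <- exp_plus. replace (- (2 * K) * b + 2 * K * b) with 0 by ring. apply exp_0. }
    assert (G b = G b * exp (- (2 * K) * b) * exp (2 * K * b)) as Eb.
    { rewrite Rmult_assoc, E1; ring. }
    rewrite Eb.
    apply Rle_trans with (G a * exp (- (2 * K) * a) * exp (2 * K * b)).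
    { apply Rmult_le_compat_r; [left; apply exp_pos|auto]. }
    rewrite Rmult_assoc, <- exp_plus.
    assert (0 <= G a) by (apply Hpos; lra).
    rewrite Rmult_comm. apply Rmult_le_compat_r; auto.
    destruct (Req_dec (- (2 * K) * a + 2 * K * b) (2 * K)) as [Eq|Ne].
    rewrite Eq; lra. left. apply exp_increasing. nra. }
  destruct (Rle_or_lt (G 1) (exp (2 * K) * G 0)) as [Ok|Bad]; auto. exfalso.
  set (del := G 1 - exp (2 * K) * G 0).
  assert (Hd : del > 0) by (unfold del; lra).
  assert (Ee : exp (2 * K) > 0) by apply exp_pos.
  destruct (L0 (del / (3 * exp (2 * K)))) as [a0 [Ha0 Ha0']].
  { apply Rdiv_lt_0_compat; lra. }
  destruct (L1 (del / 3)) as [a1 [Ha1 Ha1']]. lra.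
  set (a := Rmin (a0 / 2) (1 / 4)). set (b := Rmax (1 - a1 / 2) (3 / 4)).
  assert (Ha : 0 < a /\ a < a0 /\ a <= 1/4).
  { unfold a. split. apply Rmin_glb_lt; lra. split. apply Rle_lt_trans with (a0/2). apply Rmin_l. lra. apply Rmin_r. }
  assert (Hb : 1 - a1 < b /\ b < 1 /\ 3/4 <= b).
  { unfold b. split. apply Rlt_le_trans with (1 - a1/2). lra. apply Rmax_l. split. apply Rmax_lub_lt; lra. apply Rmax_r. }
  specialize (Ha0' a). specialize (Ha1' b).
  assert (R_dist (G a) (G 0) < del / (3 * exp (2 * K))).
  { apply Ha0'. split. lra. unfold R_dist, dist; simpl. unfold R_dist. rewrite Rminus_0_r, Rabs_right; lra. }
  assert (R_dist (G b) (G 1) < del / 3).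
  { apply Ha1'. split. lra. unfold dist; simpl. unfold R_dist. rewrite Rabs_left; lra. }
  unfold R_dist in *. apply Rabs_def2 in H0. apply Rabs_def2 in H1.
  pose proof (Hab a b ltac:(lra) ltac:(lra) ltac:(lra)).
  assert (exp (2 * K) * (del / (3 * exp (2 * K))) = del / 3) by (field; lra).
  assert (exp (2 * K) * G a < exp (2 * K) * G 0 + del / 3).
  { rewrite <- H3. rewrite <- Rmult_plus_distr_l. apply Rmult_lt_compat_l; lra. }
  unfold del in *. lra.
Qed.

Fixpoint rsum (f : nat -> R) (n : nat) : R :=
  match n with O => 0 | S m => rsum f m + f m end.

Lemma rsum_ext f g n : (forall k, (k < n)%nat -> f k = g k) -> rsum f n = rsum g n.
Proof. induction n; simpl; intros; auto. rewrite IHn by auto. rewrite H by lia. auto. Qed.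
Lemma rsum_add f g n : rsum (fun k => f k + g k) n = rsum f n + rsum g n.
Proof. induction n; simpl. lra. rewrite IHn; lra. Qed.
Lemma rsum_scal c f n : rsum (fun k => c * f k) n = c * rsum f n.
Proof. induction n; simpl. lra. rewrite IHn; lra. Qed.
Lemma rsum_le f g n : (forall k, (k < n)%nat -> f k <= g k) -> rsum f n <= rsum g n.
Proof. induction n; simpl; intros. lra. apply Rplus_le_compat. apply IHn; auto. apply H; lia. Qed.
Lemma rsum_nonneg f n : (forall k, (k < n)%nat -> 0 <= f k) -> 0 <= rsum f n.
Proof. induction n; simpl; intros. lra. assert (0 <= f n) by (apply H; lia). assert (0 <= rsum f n) by auto. lra. Qed.
Lemma rsum_zero n : rsum (fun _ => 0) n = 0.
Proof. induction n; simpl; auto. rewrite IHn; lra. Qed.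
Lemma rsum_swap f n m : rsum (fun k => rsum (fun l => f k l) m) n = rsum (fun l => rsum (fun k => f k l) n) m.
Proof.
  induction n; simpl. rewrite rsum_zero; auto.
  rewrite IHn. rewrite <- rsum_add. auto.
Qed.
Lemma rsum_single f n k0 : (k0 < n)%nat -> (forall k, (k < n)%nat -> k <> k0 -> f k = 0) -> rsum f n = f k0.
Proof.
  induction n; intros; [lia|]. simpl.
  destruct (Nat.eq_dec k0 n).
  - subst. rewrite (rsum_ext f (fun _ => 0)). rewrite rsum_zero; ring.
    intros; apply H0; lia.
  - rewrite IHn by (try lia; intros; apply H0; lia). rewrite (H0 n) by lia. ring.
Qed.
Lemma rsum_ge_term f n k0 : (k0 < n)%nat -> (forall k, (k < n)%nat -> 0 <= f k) -> f k0 <= rsum f n.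
Proof.
  induction n; intros; [lia|]. simpl.
  destruct (Nat.eq_dec k0 n).
  - subst. assert (0 <= rsum f n) by (apply rsum_nonneg; intros; apply H0; lia). lra.
  - assert (f k0 <= rsum f n) by (apply IHn; try lia; intros; apply H0; lia).
    assert (0 <= f n) by (apply H0; lia). lra.
Qed.
Lemma rsum_shift f n : rsum f (S n) = f 0%nat + rsum (fun k => f (S k)) n.
Proof. induction n; simpl in *. lra. rewrite IHn. lra. Qed.

Definition lsum (l : list R) := fold_right Rplus 0 l.
Lemma lsum_perm l l' : Permutation l l' -> lsum l = lsum l'.
Proof. induction 1; simpl; auto; try lra. Qed.
Lemma lsum_app l l' : lsum (l ++ l') = lsum l + lsum l'.
Proof. induction l; simpl. lra. rewrite IHl; lra. Qed.
Lemma rsum_lsum f n : rsum f n = lsum (map f (seq 0 n)).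
Proof.
  induction n. reflexivity. change (rsum f (S n)) with (rsum f n + f n). rewrite seq_S, map_app, lsum_app, IHn. simpl. lra.
Qed.

Lemma rsum_reindex f n (s : nat -> nat) :
  (forall k, (k < n)%nat -> (s k < n)%nat /\ s (s k) = k) ->
  rsum (fun k => f (s k)) n = rsum f n.
Proof.
  intros H. rewrite !rsum_lsum. rewrite <- (map_map s f).
  apply lsum_perm. apply Permutation_map.
  apply NoDup_Permutation.
  - apply FinFun.Injective_map_NoDup_in. 2: apply seq_NoDup.
    intros x y Hx Hy E. apply in_seq in Hx, Hy.
    rewrite <- (proj2 (H x ltac:(lia))), <- (proj2 (H y ltac:(lia))), E; auto.
  - apply seq_NoDup.
  - intros x. rewrite in_map_iff. split.
    + intros [y [E Hy]]. apply in_seq in Hy. subst. apply in_seq. pose proof (H y ltac:(lia)). lia.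
    + intros Hx. apply in_seq in Hx. exists (s x). split. apply H; lia. apply in_seq. pose proof (H x ltac:(lia)). lia.
Qed.

Lemma rsum_deriv (F dF : nat -> R -> R) n u :
  (forall k, (k < n)%nat -> derivable_pt_lim (F k) u (dF k u)) ->
  derivable_pt_lim (fun t => rsum (fun k => F k t) n) u (rsum (fun k => dF k u) n).
Proof.
  induction n; intros H; simpl.
  - apply derivable_pt_lim_const.
  - pose proof (derivable_pt_lim_plus _ _ _ _ _ (IHn (fun k Hk => H k ltac:(lia))) (H n ltac:(lia))) as D.
    exact D.
Qed.

Lemma rsum_limit (F : nat -> R -> R) n D x0 :
  (forall k, (k < n)%nat -> limit1_in (F k) D (F k x0) x0) ->
  limit1_in (fun t => rsum (fun k => F k t) n) D (rsum (fun k => F k x0) n) x0.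
Proof.
  induction n; intros H; simpl.
  - apply (limit_free (fun _ => 0) D 0 x0).
  - apply limit_plus. apply IHn; intros; apply H; lia. apply H; lia.
Qed.

Definition natdist' (p q : nat) : nat := ((p - q) + (q - p))%nat.

Lemma geo_sum mu n : 0 <= mu < 1 -> rsum (fun q => mu ^ q) n <= 1 / (1 - mu).
Proof.
  intros Hm. assert (forall n, rsum (fun q => mu ^ q) n = (1 - mu ^ n) / (1 - mu)).
  { induction n0; simpl. field; lra. rewrite IHn0. field; lra. }
  rewrite H. apply Rmult_le_compat_r. left; apply Rinv_0_lt_compat; lra.
  pose proof (pow_le mu n ltac:(lra)). lra.
Qed.

Lemma pow_le1 mu k : 0 <= mu <= 1 -> mu ^ k <= 1.
Proof. intros; induction k; simpl. lra. pose proof (pow_le mu k ltac:(lra)). nra. Qed.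

Lemma dist_sum mu : 0 <= mu < 1 -> forall p n,
  rsum (fun q => mu ^ natdist' p q) n <= (1 + mu - mu ^ (S p)) / (1 - mu).
Proof.
  intros Hm p. induction p; intros n.
  - rewrite (rsum_ext _ (fun q => mu ^ q)). eapply Rle_trans. apply geo_sum; auto.
    apply Req_le. simpl. field; lra. intros; unfold natdist'; f_equal; lia.
  - destruct n.
    + simpl. apply Rmult_le_pos. pose proof (pow_le1 mu (S (S p)) ltac:(lra)). simpl in H. lra.
      left; apply Rinv_0_lt_compat; lra.
    + rewrite rsum_shift. rewrite (rsum_ext _ (fun q => mu ^ natdist' p q)).
      2:{ intros; unfold natdist'; f_equal; lia. }
      replace (natdist' (S p) 0) with (S p) by (unfold natdist'; lia).
      specialize (IHp n).
      apply Rle_trans with (mu ^ S p + (1 + mu - mu ^ S p) / (1 - mu)). lra.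
      apply Req_le. simpl. field. lra.
Qed.

Definition DC (F : R -> C) (u : R) (F' : C) :=
  derivable_pt_lim (fun t => Re (F t)) u (Re F') /\ derivable_pt_lim (fun t => Im (F t)) u (Im F').

Lemma DC_csum (F : nat -> R -> C) (F' : nat -> C) n u :
  (forall k, (k < n)%nat -> DC (F k) u (F' k)) -> DC (fun t => csum (fun k => F k t) n) u (csum F' n).
Proof.
  induction n; intros H; simpl.
  - split; apply derivable_pt_lim_const.
  - destruct (IHn (fun k Hk => H k ltac:(lia))) as [A B]. destruct (H n ltac:(lia)) as [A' B'].
    split. exact (derivable_pt_lim_plus _ _ _ _ _ A A'). exact (derivable_pt_lim_plus _ _ _ _ _ B B').
Qed.

Lemma DC_cmul c (F : R -> C) F' u : DC F u F' -> DC (fun t => Cmul c (F t)) u (Cmul c F').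
Proof.
  intros [A B]. simpl. split.
  - pose proof (derivable_pt_lim_scal _ (Re c) _ _ A) as A1.
    pose proof (derivable_pt_lim_scal _ (Im c) _ _ B) as B1.
    pose proof (derivable_pt_lim_minus _ _ _ _ _ A1 B1) as E. exact E.
  - pose proof (derivable_pt_lim_scal _ (Re c) _ _ B) as A1.
    pose proof (derivable_pt_lim_scal _ (Im c) _ _ A) as B1.
    pose proof (derivable_pt_lim_plus _ _ _ _ _ A1 B1) as E. exact E.
Qed.

Lemma omega_expand N E V : omega N E V =
  Cmul (RtoC (/ 2 ^ N)) (csum (fun a => csum (fun k => Cmul (Cconj (E k a)) (V k a)) (2^N)) (2^N)).
Proof. reflexivity. Qed.

Lemma DC_omega N E (U : R -> Mx) V u :
  (forall i j, (i < 2^N)%nat -> (j < 2^N)%nat -> DC (fun t => U t i j) u (V i j)) ->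
  DC (fun t => omega N E (U t)) u (omega N E V).
Proof.
  intros H. unfold DC. rewrite omega_expand.
  assert (DC (fun t => omega N E (U t)) u (omega N E V)); [|auto].
  unfold omega. apply DC_cmul. apply DC_csum. intros a Ha. apply DC_csum. intros k Hk.
  apply DC_cmul. apply H; auto.
Qed.

Definition LC (F : R -> C) (t0 : R) :=
  limit1_in (fun t => Re (F t)) (fun t => 0 <= t <= 1) (Re (F t0)) t0 /\
  limit1_in (fun t => Im (F t)) (fun t => 0 <= t <= 1) (Im (F t0)) t0.

Lemma LC_csum (F : nat -> R -> C) n t0 :
  (forall k, (k < n)%nat -> LC (F k) t0) -> LC (fun t => csum (fun k => F k t) n) t0.
Proof.
  induction n; intros H; simpl.
  - split; apply (limit_free (fun _ => 0) _ 0 t0).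
  - destruct (IHn (fun k Hk => H k ltac:(lia))) as [A B]. destruct (H n ltac:(lia)) as [A' B'].
    split. exact (limit_plus _ _ _ _ _ _ A A'). exact (limit_plus _ _ _ _ _ _ B B').
Qed.

Lemma limit_const (c : R) D x0 : limit1_in (fun _ => c) D c x0.
Proof. exact (limit_free (fun _ => c) D 0 x0). Qed.

Lemma LC_cmul c (F : R -> C) t0 : LC F t0 -> LC (fun t => Cmul c (F t)) t0.
Proof.
  intros [A B]. simpl. split.
  - pose proof (limit_mul _ _ _ _ _ _ (limit_const (Re c) _ t0) A) as A1.
    pose proof (limit_mul _ _ _ _ _ _ (limit_const (Im c) _ t0) B) as B1.
    pose proof (limit_minus _ _ _ _ _ _ A1 B1) as E. exact E.
  - pose proof (limit_mul _ _ _ _ _ _ (limit_const (Re c) _ t0) B) as A1.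
    pose proof (limit_mul _ _ _ _ _ _ (limit_const (Im c) _ t0) A) as B1.
    pose proof (limit_plus _ _ _ _ _ _ A1 B1) as E. exact E.
Qed.

Lemma LC_omega N E (U : R -> Mx) t0 :
  (forall i j, (i < 2^N)%nat -> (j < 2^N)%nat -> LC (fun t => U t i j) t0) ->
  LC (fun t => omega N E (U t)) t0.
Proof.
  intros H. unfold omega. apply LC_cmul. apply LC_csum. intros a Ha. apply LC_csum. intros k Hk.
  apply LC_cmul. apply H; auto.
Qed.

Lemma omega_ext_V N E V V' : (forall i j, (i < 2^N)%nat -> (j < 2^N)%nat -> V i j = V' i j) ->
  omega N E V = omega N E V'.
Proof.
  intros H. rewrite !omega_expand. f_equal. apply csum_ext; intros. apply csum_ext; intros. rewrite H; auto.
Qed.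
Lemma omega_meq_E N E E' V : meq (2^N) E E' -> omega N E V = omega N E' V.
Proof.
  intros H. rewrite !omega_expand. f_equal. apply csum_ext; intros. apply csum_ext; intros. rewrite H; auto.
Qed.
Lemma csum2_factor c (f : nat -> nat -> C) n m :
  csum (fun a => csum (fun k => Cmul c (f a k)) n) m = Cmul c (csum (fun a => csum (fun k => f a k) n) m).
Proof.
  rewrite <- csum_mul_l. apply csum_ext; intros. apply csum_mul_l.
Qed.

Lemma omega_scale_E N s E V : omega N (mx_scale s E) V = Cmul (Cconj s) (omega N E V).
Proof.
  rewrite !omega_expand.
  rewrite (csum_ext _ (fun a => csum (fun k => Cmul (Cconj s) (Cmul (Cconj (E k a)) (V k a))) (2 ^ N))).
  rewrite csum2_factor. ring.
  intros. apply csum_ext; intros. unfold mx_scale. rewrite Cconj_mul. ring.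
Qed.

Lemma omega_lin N E (c : nat -> C) (M : nat -> Mx) n :
  omega N E (fun i j => csum (fun p => Cmul (c p) (M p i j)) n) = csum (fun p => Cmul (c p) (omega N E (M p))) n.
Proof.
  rewrite omega_expand.
  rewrite (csum_ext _ (fun a => csum (fun p => csum (fun k => Cmul (c p) (Cmul (Cconj (E k a)) (M p k a))) (2^N)) n)).
  2:{ intros a Ha. rewrite <- csum_swap. apply csum_ext; intros k Hk. rewrite <- csum_mul_l.
      apply csum_ext; intros; ring. }
  rewrite csum_swap. rewrite <- csum_mul_l. apply csum_ext; intros p Hp.
  rewrite omega_expand. rewrite csum2_factor. ring.
Qed.

Lemma mx_mul_sum_l d (f : nat -> Mx) n B i j :
  mx_mul d (mx_sum f n) B i j = csum (fun p => mx_mul d (f p) B i j) n.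
Proof.
  unfold mx_mul, mx_sum. rewrite (csum_ext _ (fun k => csum (fun p => Cmul (f p i k) (B k j)) n)).
  apply csum_swap. intros; rewrite <- csum_mul_r; auto.
Qed.

Lemma Dhat_expand N D u V i j :
  mx_mul (2^N) (mx_scale Ci (Dhat N D u)) V i j =
  csum (fun p => csum (fun q => Cmul (RtoC (- / 4 * D u (S p) (S q)))
     (mx_mul (2^N) (mx_mul (2^N) (majorana N (S p)) (majorana N (S q))) V i j)) (2 * N)) (2 * N).
Proof.
  unfold Dhat. rewrite !mx_mul_scale_l, mx_mul_sum_l.
  rewrite <- !csum_mul_l. apply csum_ext; intros p Hp.
  rewrite mx_mul_sum_l. rewrite <- !csum_mul_l. apply csum_ext; intros q Hq.
  rewrite mx_mul_scale_l. Ceq.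
Qed.

Lemma mx_mul_ext_l d A A' B i j : (forall k, A i k = A' i k) -> mx_mul d A B i j = mx_mul d A' B i j.
Proof. intros H; unfold mx_mul; apply csum_ext; intros; rewrite H; auto. Qed.
Lemma mx_mul_ext_r d A B B' i j : (forall k, B k j = B' k j) -> mx_mul d A B i j = mx_mul d A B' i j.
Proof. intros H; unfold mx_mul; apply csum_ext; intros; rewrite H; auto. Qed.

Lemma mx_adj_mul d A B i j : mx_adj (mx_mul d A B) i j = mx_mul d (mx_adj B) (mx_adj A) i j.
Proof.
  unfold mx_adj, mx_mul. rewrite <- csum_conj. apply csum_ext; intros. rewrite Cconj_mul. ring.
Qed.

Lemma omega_pair N E p q V :
  omega N E (mx_mul (2^N) (mx_mul (2^N) (majorana N p) (majorana N q)) V) =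
  omega N (mx_mul (2^N) (majorana N q) (mx_mul (2^N) (majorana N p) E)) V.
Proof.
  unfold omega. f_equal. unfold mx_trace. apply csum_ext; intros a Ha.
  symmetry.
  rewrite (mx_mul_ext_l _ _ (mx_mul (2^N) (mx_mul (2^N) (mx_adj E) (majorana N p)) (majorana N q))).
  2:{ intros k. rewrite mx_adj_mul.
      transitivity (mx_mul (2^N) (mx_adj (mx_mul (2 ^ N) (majorana N p) E)) (majorana N q) a k).
      apply mx_mul_ext_r; intros; apply maj_herm.
      apply mx_mul_ext_l; intros k'; rewrite mx_adj_mul. apply mx_mul_ext_r; intros; apply maj_herm. }
  rewrite !mx_mul_assoc. apply mx_mul_ext_r. intros k. rewrite mx_mul_assoc. auto.
Qed.

Lemma schur_term a A R Wm Wt x1 x2 y1 y2 :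
  Rabs a <= A -> 0 < Wm -> 0 < Wt -> Wt <= R * Wm ->
  a * (2 * (x1 * y1 + x2 * y2)) * / (Wm * Wm) <=
  A * R * ((x1 * x1 + x2 * x2) * / (Wm * Wm) + (y1 * y1 + y2 * y2) * / (Wt * Wt)).
Proof.
  intros Ha HWm HWt HR.
  set (X1 := x1 / Wm). set (X2 := x2 / Wm). set (Y1 := y1 / Wt). set (Y2 := y2 / Wt).
  assert (E1 : a * (2 * (x1 * y1 + x2 * y2)) * / (Wm * Wm) = a * (2 * (X1 * Y1 + X2 * Y2)) * (Wt / Wm)).
  { unfold X1, X2, Y1, Y2. field. lra. }
  assert (E2 : (x1 * x1 + x2 * x2) * / (Wm * Wm) + (y1 * y1 + y2 * y2) * / (Wt * Wt) = X1*X1+X2*X2+Y1*Y1+Y2*Y2).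
  { unfold X1, X2, Y1, Y2. field. lra. }
  rewrite E1, E2.
  assert (HS : Rabs (2 * (X1 * Y1 + X2 * Y2)) <= X1*X1+X2*X2+Y1*Y1+Y2*Y2).
  { pose proof (Rle_0_sqr (X1 + Y1)). pose proof (Rle_0_sqr (X2 + Y2)).
    pose proof (Rle_0_sqr (X1 - Y1)). pose proof (Rle_0_sqr (X2 - Y2)). unfold Rsqr in *.
    apply Rabs_le. split; nra. }
  assert (HQ : 0 < Wt / Wm <= R).
  { split. apply Rdiv_lt_0_compat; lra. apply Rmult_le_reg_r with Wm; auto. field_simplify; lra. }
  assert (0 <= A) by (pose proof (Rabs_pos a); lra).
  set (Z := 2 * (X1 * Y1 + X2 * Y2)) in *. set (S := X1*X1+X2*X2+Y1*Y1+Y2*Y2) in *.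
  assert (a * Z <= Rabs a * Rabs Z) by (rewrite <- Rabs_mult; apply Rle_abs).
  assert (0 <= Rabs Z) by apply Rabs_pos.
  assert (0 <= Rabs a) by apply Rabs_pos.
  assert (Rabs a * Rabs Z <= A * S) by (apply Rmult_le_compat; auto).
  assert (0 <= S) by (pose proof (Rabs_pos Z); lra).
  apply Rle_trans with (A * S * (Wt / Wm)). apply Rmult_le_compat_r; lra.
  replace (A * R * S) with (A * S * R) by ring. apply Rmult_le_compat_l. nra. lra.
Qed.

Lemma Rpower_le_base_lt1 e x y : 0 < e < 1 -> y <= x -> Rpower e x <= Rpower e y.
Proof.
  intros He Hxy. unfold Rpower. assert (ln e < 0).
  { rewrite <- ln_1. apply ln_increasing; lra. }
  destruct (Req_dec x y). subst; lra. left. apply exp_increasing. nra.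
Qed.

Lemma lam_bounds r : 1 <= r -> 2/3 <= lam r < 1.
Proof.
  intros Hr. unfold lam. split.
  - rewrite <- (Rpower_1 (2/3)) at 1 by lra. apply Rpower_le_base_lt1. lra.
    assert (/ (4 * r) <= / 4). apply Rinv_le_contravar; lra. lra.
  - rewrite <- (Rpower_O (2/3)) by lra. unfold Rpower. apply exp_increasing.
    assert (ln (2/3) < 0) by (rewrite <- ln_1; apply ln_increasing; lra).
    assert (0 < / (4 * r)) by (apply Rinv_0_lt_compat; lra). nra.
Qed.

Lemma pow_le_exp mu a b : 0 <= mu <= 1 -> (b <= a)%nat -> mu ^ a <= mu ^ b.
Proof.
  intros Hm Hab. replace a with (b + (a - b))%nat by lia. rewrite pow_add.
  pose proof (pow_le1 mu (a - b) Hm). pose proof (pow_le mu b ltac:(lra)). nra.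
Qed.


Lemma span_bound p q : (2 * span (S p) (S q) <= natdist (S p) (S q) + 3)%nat.
Proof.
  unfold span, jq, natdist. replace (S p - 1)%nat with p by lia. replace (S q - 1)%nat with q by lia.
  pose proof (Nat.div_mod p 2 ltac:(lia)). pose proof (Nat.mod_upper_bound p 2 ltac:(lia)).
  pose proof (Nat.div_mod q 2 ltac:(lia)). pose proof (Nat.mod_upper_bound q 2 ltac:(lia)).
  lia.
Qed.

Definition Acoef c eps r p q := c * eps * r ^ 2 * lam r ^ natdist (S p) (S q) / 4.
Definition Rcoef eps r p q := / (sqrt eps * lam r ^ span (S p) (S q)).
Definition Kc N c eps r := rsum (fun p => rsum (fun q => Acoef c eps r p q * Rcoef eps r p q) (2 * N)) (2 * N).

Lemma term_bound c eps r p q : 0 < c -> 0 < eps -> 1 <= r ->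
  Acoef c eps r p q * Rcoef eps r p q <=
  c * sqrt eps * r ^ 2 / (4 * sqrt (lam r) ^ 3) * sqrt (lam r) ^ natdist' p q.
Proof.
  intros Hc He Hr. destruct (lam_bounds r Hr) as [L1 L2].
  set (L := lam r) in *. set (mu := sqrt L).
  assert (Hmu : 0 < mu) by (apply sqrt_lt_R0; lra).
  assert (HL : L = mu * mu) by (unfold mu; rewrite sqrt_sqrt; lra).
  assert (Hmu1 : mu <= 1). { assert (mu * mu <= 1) by lra. nra. }
  assert (Hse : 0 < sqrt eps) by (apply sqrt_lt_R0; lra).
  assert (Hes : eps = sqrt eps * sqrt eps) by (rewrite sqrt_sqrt; lra).
  assert (Hpow : forall k, L ^ k = mu ^ (2 * k)) by (intros; rewrite HL, pow_mult; f_equal; simpl; ring).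
  unfold Acoef, Rcoef. fold L.
  set (dd := natdist (S p) (S q)). set (sp := span (S p) (S q)).
  assert (Hd : dd = natdist' p q) by (unfold dd, natdist, natdist'; lia).
  pose proof (span_bound p q) as SB. fold dd sp in SB.
  rewrite !Hpow. rewrite <- Hd.
  assert (Hm3 : mu ^ (dd + 3) <= mu ^ (2 * sp)) by (apply pow_le_exp; auto; lra).
  assert (0 < mu ^ (2 * sp)) by (apply pow_lt; auto).
  assert (0 < mu ^ dd) by (apply pow_lt; auto).
  rewrite pow_add in Hm3.
  assert (0 < mu ^ 3) by (apply pow_lt; auto).
  rewrite Hes at 1.
  replace (mu ^ (2 * dd)) with (mu ^ dd * mu ^ dd) by (rewrite <- pow_add; f_equal; lia).
  assert (0 < r ^ 2) by (apply pow_lt; lra).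
  apply Rle_trans with (c * sqrt eps * r ^ 2 / 4 * (mu ^ dd * mu ^ dd / mu ^ (2 * sp))).
  right. field. split; lra.
  apply Rle_trans with (c * sqrt eps * r ^ 2 / 4 * (mu ^ dd / mu ^ 3)).
  2:{ right. field. lra. }
  apply Rmult_le_compat_l.
  { apply Rmult_le_pos. apply Rmult_le_pos. apply Rmult_le_pos; lra. lra. lra. }
  set (X := mu ^ dd) in *. set (Y := mu ^ (2 * sp)) in *. set (Z := mu ^ 3) in *.
  replace (X * X / Y) with (X / Z - X * (Y - X * Z) / (Y * Z)) by (field; split; lra).
  assert (0 <= X * (Y - X * Z) / (Y * Z)).
  { apply Rmult_le_pos. apply Rmult_le_pos; lra. left; apply Rinv_0_lt_compat; nra. }
  lra.
Qed.

Lemma K_bound N c eps r : 0 < c -> 0 < eps -> 1 <= r -> Kc N c eps r <= yexp eps c r * INR N.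
Proof.
  intros Hc He Hr. destruct (lam_bounds r Hr) as [L1 L2].
  set (mu := sqrt (lam r)).
  assert (Hmu : 0 < mu) by (apply sqrt_lt_R0; lra).
  assert (HL : lam r = mu * mu) by (unfold mu; rewrite sqrt_sqrt; lra).
  assert (Hmu1 : mu < 1). { assert (mu * mu < 1) by lra. nra. }
  assert (Hmu8 : 4/5 <= mu). { assert (16/25 <= mu * mu) by lra. nra. }
  assert (Hse : 0 < sqrt eps) by (apply sqrt_lt_R0; lra).
  assert (Hr2 : 0 < r ^ 2) by (apply pow_lt; lra).
  set (Cst := c * sqrt eps * r ^ 2 / (4 * mu ^ 3)).
  assert (0 < mu ^ 3) by (apply pow_lt; auto).
  assert (HC : 0 <= Cst) by (unfold Cst; apply Rmult_le_pos; [apply Rmult_le_pos; [apply Rmult_le_pos|]; lra| left; apply Rinv_0_lt_compat; lra]).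
  unfold Kc.
  apply Rle_trans with (rsum (fun p => Cst * ((1 + mu) / (1 - mu))) (2 * N)).
  { apply rsum_le. intros p Hp.
    apply Rle_trans with (rsum (fun q => Cst * mu ^ natdist' p q) (2 * N)).
    apply rsum_le. intros q Hq. apply term_bound; auto.
    rewrite rsum_scal. apply Rmult_le_compat_l; auto.
    eapply Rle_trans. apply dist_sum; lra.
    apply Rmult_le_compat_r. left; apply Rinv_0_lt_compat; lra.
    pose proof (pow_le mu (S p) ltac:(lra)). lra. }
  assert (Hc2 : forall (k : R) n, rsum (fun _ => k) n = k * INR n).
  { intros k n; induction n. simpl; ring. simpl rsum. rewrite IHn, S_INR. ring. }
  rewrite Hc2. rewrite mult_INR. simpl INR.
  unfold yexp, Cst. fold mu.
  assert (0 <= INR N) by apply pos_INR.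
  assert (mu ^ 3 >= 1/3). { simpl. nra. }
  apply Rle_trans with (c * sqrt eps * r ^ 2 * INR N * (1 / (mu ^ 3 * (1 - mu)))).
  set (Q := c * sqrt eps * r ^ 2 * INR N * (1 / (mu ^ 3 * (1 - mu)))).
  assert (0 <= Q).
  { unfold Q. apply Rmult_le_pos. apply Rmult_le_pos; [apply Rmult_le_pos; [apply Rmult_le_pos|]; lra|auto].
    unfold Rdiv. rewrite Rmult_1_l. left; apply Rinv_0_lt_compat. nra. }
  replace (c * sqrt eps * r ^ 2 / (4 * mu ^ 3) * ((1 + mu) / (1 - mu)) * ((1 + 1) * INR N))
    with (Q * ((1 + mu) / 2)) by (unfold Q; field; split; lra).
  rewrite <- (Rmult_1_r Q) at 2. apply Rmult_le_compat_l; lra.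
  apply Rle_trans with (c * sqrt eps * r ^ 2 * INR N * (3 / (1 - mu))).
  2:{ right. field. lra. }
  apply Rmult_le_compat_l. apply Rmult_le_pos; [apply Rmult_le_pos; [apply Rmult_le_pos|]; lra|auto].
  apply Rmult_le_reg_r with (mu ^ 3 * (1 - mu)). nra.
  field_simplify; try lra.
Qed.

Lemma omega_sum N E (M : nat -> Mx) n :
  omega N E (fun i j => csum (fun p => M p i j) n) = csum (fun p => omega N E (M p)) n.
Proof.
  rewrite (omega_ext_V N E _ (fun i j => csum (fun p => Cmul C1 (M p i j)) n)).
  rewrite omega_lin. apply csum_ext; intros; ring.
  intros; apply csum_ext; intros; ring.
Qed.

Lemma Re_csum f n : Re (csum f n) = rsum (fun k => Re (f k)) n.
Proof. induction n; simpl; auto. rewrite IHn; auto. Qed.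
Lemma Im_csum f n : Im (csum f n) = rsum (fun k => Im (f k)) n.
Proof. induction n; simpl; auto. rewrite IHn; auto. Qed.

Definition Wt N eps r m := Rpower eps (INR (fw N m) / 4) * lam r ^ qw N (mono N m).

Lemma Wt_pos N eps r m : 0 < eps -> 1 <= r -> 0 < Wt N eps r m.
Proof.
  intros He Hr. unfold Wt. apply Rmult_lt_0_compat. unfold Rpower; apply exp_pos.
  apply pow_lt. destruct (lam_bounds r Hr); lra.
Qed.

Lemma Wt_tau N eps r m p q : 0 < eps < 1 -> 1 <= r -> (p < 2 * N)%nat -> (q < 2 * N)%nat ->
  Wt N eps r (tau (S p) (S q) m) <= Rcoef eps r p q * Wt N eps r m.
Proof.
  intros He Hr Hp Hq. destruct (lam_bounds r Hr) as [L1 L2].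
  unfold Rcoef.
  assert (Hse : 0 < sqrt eps) by (apply sqrt_lt_R0; lra).
  assert (0 < lam r ^ span (S p) (S q)) by (apply pow_lt; lra).
  assert (0 < Wt N eps r (tau (S p) (S q) m)) by (apply Wt_pos; lra).
  apply Rmult_le_reg_l with (sqrt eps * lam r ^ span (S p) (S q)). nra.
  rewrite <- Rmult_assoc, Rinv_r, Rmult_1_l by nra.
  unfold Wt.
  pose proof (fw_tau N (S p) (S q) m ltac:(lia) ltac:(lia)) as F1.
  pose proof (qw_tau N (S p) (S q) m ltac:(lia) ltac:(lia)) as Q1.
  rewrite <- Rpower_sqrt by lra.
  replace (Rpower eps (/ 2) * lam r ^ span (S p) (S q) *
     (Rpower eps (INR (fw N (tau (S p) (S q) m)) / 4) * lam r ^ qw N (mono N (tau (S p) (S q) m))))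
  with (Rpower eps (INR (fw N (tau (S p) (S q) m)) / 4 + / 2) * lam r ^ (qw N (mono N (tau (S p) (S q) m)) + span (S p) (S q)))
  by (rewrite Rpower_plus, pow_add; ring).
  apply Rmult_le_compat.
  - unfold Rpower; left; apply exp_pos.
  - left; apply pow_lt; lra.
  - apply Rpower_le_base_lt1; auto. apply le_INR in F1. rewrite plus_INR in F1. simpl in F1. lra.
  - apply pow_le_exp. lra. lia.
Qed.

Lemma rsum2_lin (al be : R) (F H : nat -> nat -> R) n1 n2 :
  rsum (fun p => rsum (fun q => al * F p q + be * H p q) n2) n1 =
  al * rsum (fun p => rsum (fun q => F p q) n2) n1 + be * rsum (fun p => rsum (fun q => H p q) n2) n1.
Proof.
  rewrite <- !rsum_scal, <- rsum_add. apply rsum_ext; intros.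
  rewrite <- !rsum_scal, <- rsum_add. auto.
Qed.

Lemma schur_sum (n NN : nat) (x Om : nat -> C) (T : nat -> nat -> nat -> C)
  (a A Rc : nat -> nat -> R) (W : nat -> R) (tau' : nat -> nat -> nat -> nat) :
  (forall m, (m < n)%nat -> Om m = csum (fun p => csum (fun q => Cmul (RtoC (a p q)) (T p q m)) NN) NN) ->
  (forall p q m, (p < NN)%nat -> (q < NN)%nat -> (m < n)%nat ->
     exists s, (s = C1 \/ s = Copp C1) /\ T p q m = Cmul s (x (tau' p q m))) ->
  (forall p q, (p < NN)%nat -> (q < NN)%nat -> Rabs (a p q) <= A p q) ->
  (forall m, 0 < W m) ->
  (forall p q m, (p < NN)%nat -> (q < NN)%nat -> (m < n)%nat -> W (tau' p q m) <= Rc p q * W m) ->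
  (forall p q m, (p < NN)%nat -> (q < NN)%nat -> (m < n)%nat -> (tau' p q m < n)%nat /\ tau' p q (tau' p q m) = m) ->
  rsum (fun m => / (W m * W m) * (2 * (Re (x m) * Re (Om m) + Im (x m) * Im (Om m)))) n <=
  2 * rsum (fun p => rsum (fun q => A p q * Rc p q) NN) NN *
  rsum (fun m => / (W m * W m) * (Re (x m) * Re (x m) + Im (x m) * Im (x m))) n.
Proof.
  intros HOm HT Ha HW HWt Htau.
  set (g := fun m => / (W m * W m) * (Re (x m) * Re (x m) + Im (x m) * Im (x m))).
  apply Rle_trans with (rsum (fun m => rsum (fun p => rsum (fun q => A p q * Rc p q * (g m + g (tau' p q m))) NN) NN) n).
  - apply rsum_le. intros m Hm.
    rewrite HOm by auto. rewrite Re_csum, Im_csum.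
    rewrite (rsum_ext (fun k => Re _) (fun p => rsum (fun q => a p q * Re (T p q m)) NN)).
    2:{ intros. rewrite Re_csum. apply rsum_ext; intros. simpl. ring. }
    rewrite (rsum_ext (fun k => Im _) (fun p => rsum (fun q => a p q * Im (T p q m)) NN)).
    2:{ intros. rewrite Im_csum. apply rsum_ext; intros. simpl. ring. }
    assert (E : / (W m * W m) * (2 * (Re (x m) * rsum (fun p => rsum (fun q => a p q * Re (T p q m)) NN) NN +
       Im (x m) * rsum (fun p => rsum (fun q => a p q * Im (T p q m)) NN) NN)) =
       rsum (fun p => rsum (fun q => a p q * (2 * (Re (x m) * Re (T p q m) + Im (x m) * Im (T p q m))) * / (W m * W m)) NN) NN).
    { rewrite (rsum_ext (fun p => rsum (fun q => a p q * _ * _) NN)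
        (fun p => rsum (fun q => (/ (W m * W m) * 2 * Re (x m)) * (a p q * Re (T p q m)) + (/ (W m * W m) * 2 * Im (x m)) * (a p q * Im (T p q m))) NN)).
      rewrite rsum2_lin. ring.
      intros; apply rsum_ext; intros; ring. }
    rewrite E. apply rsum_le; intros p Hp. apply rsum_le; intros q Hq.
    destruct (HT p q m Hp Hq Hm) as [s [Hs Es]].
    pose proof (HW m). pose proof (HW (tau' p q m)).
    eapply Rle_trans. apply (schur_term (a p q) (A p q) (Rc p q) (W m) (W (tau' p q m))); auto.
    unfold g. apply Req_le. rewrite Es.
    destruct Hs; subst; simpl; field; lra.
  - rewrite (rsum_ext _ (fun m => rsum (fun p => rsum (fun q => A p q * Rc p q * g m + A p q * Rc p q * g (tau' p q m)) NN) NN)).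
    2:{ intros; apply rsum_ext; intros; apply rsum_ext; intros; ring. }
    rewrite (rsum_swap _ n NN). apply Req_le.
    set (G := rsum g n).
    transitivity (rsum (fun p => rsum (fun q => (2 * G) * (A p q * Rc p q)) NN) NN).
    + apply rsum_ext; intros p Hp. rewrite (rsum_swap _ n NN). apply rsum_ext; intros q Hq.
      rewrite rsum_add. rewrite !rsum_scal.
      rewrite (rsum_reindex g n (tau' p q)). fold G. ring.
      intros; apply Htau; auto.
    + rewrite (rsum_ext _ (fun p => (2 * G) * rsum (fun q => A p q * Rc p q) NN)).
      rewrite rsum_scal. ring.
      intros; apply rsum_scal.
Qed.

Lemma mono0 N : mono N 0 = mx_id.
Proof. unfold mono. rewrite list_of_0. reflexivity. Qed.

Lemma qw_mono0 N : qw N (mono N 0) = 0%nat.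
Proof.
  unfold qw. rewrite mono0.
  assert (forall l, (forall k, In k l -> nontriv N mx_id k = false) -> length (filter (nontriv N mx_id) l) = 0%nat).
  { induction l; intros H; simpl; auto. rewrite H by (left; auto). apply IHl; intros; apply H; right; auto. }
  apply H. intros k _. unfold nontriv. destruct (bool_of (comm_at N k mx_id)) eqn:E; auto.
  exfalso. assert (comm_at N k mx_id).
  { split; intros i j Hi Hj; rewrite mx_mul_id_l, mx_mul_id_r; auto. }
  apply (proj2 (bool_of_true _)) in H0. congruence.
Qed.

Lemma fw0 N : fw N 0 = 0%nat.
Proof. unfold fw. rewrite list_of_0. auto. Qed.

Lemma om_init N (U0 : Mx) m : (forall i j, (i < 2^N)%nat -> (j < 2^N)%nat -> U0 i j = mx_id i j) ->
  (m < 2^(2*N))%nat -> omega N (mono N m) U0 = if (m =? 0)%nat then C1 else C0.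
Proof.
  intros H Hm. rewrite (omega_ext_V N _ U0 mx_id) by auto.
  rewrite omega_expand.
  rewrite (csum_ext _ (fun a => Cconj (mono N m a a))).
  2:{ intros a Ha. rewrite (csum_single _ _ a) by (auto; intros k Hk Hka; unfold mx_id;
        destruct (Nat.eqb_spec k a); try lia; ring). unfold mx_id; rewrite Nat.eqb_refl; ring. }
  destruct (Nat.eqb_spec m 0).
  - subst. rewrite mono0. rewrite (csum_ext _ (fun _ => RtoC 1)).
    2:{ intros; unfold mx_id; rewrite Nat.eqb_refl; Ceq. }
    assert (forall k, csum (fun _ => RtoC 1) k = RtoC (INR k)).
    { induction k. simpl; Ceq. simpl csum. rewrite IHk, S_INR. Ceq. }
    rewrite H0. rewrite pow_INR. simpl INR. Ceq. replace (1 + 1) with 2 by ring. field. apply pow_nonzero; lra.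
  - rewrite csum_conj. fold (mx_trace (2^N) (mono N m)). unfold mono.
    rewrite trace_mono_zero. Ceq. apply list_of_NoDup. apply list_of_inrange.
    intros E. apply n. apply (list_of_nil N m); auto.
Qed.

Lemma Om_expand N D U0 m u :
  omega N (mono N m) (mx_mul (2^N) (mx_scale Ci (Dhat N D u)) U0) =
  csum (fun p => csum (fun q => Cmul (RtoC (- / 4 * D u (S p) (S q)))
    (omega N (mx_mul (2^N) (majorana N (S q)) (mx_mul (2^N) (majorana N (S p)) (mono N m))) U0)) (2 * N)) (2 * N).
Proof.
  rewrite (omega_ext_V _ _ _ _ (fun i j _ _ => Dhat_expand N D u U0 i j)).
  rewrite omega_sum. apply csum_ext; intros p Hp.
  rewrite omega_lin. apply csum_ext; intros q Hq. rewrite omega_pair. auto.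
Qed.

Lemma T_tau N m p q V : (p < 2 * N)%nat -> (q < 2 * N)%nat ->
  exists s, (s = C1 \/ s = Copp C1) /\
  omega N (mx_mul (2^N) (majorana N (S q)) (mx_mul (2^N) (majorana N (S p)) (mono N m))) V =
  Cmul s (omega N (mono N (tau (S p) (S q) m)) V).
Proof.
  intros Hp Hq. destruct (pair_action N (S p) (S q) m ltac:(lia) ltac:(lia)) as [s [Hs E]].
  exists s; split; auto. rewrite (omega_meq_E _ _ _ _ E). rewrite omega_scale_E.
  destruct Hs; subst; f_equal; Ceq.
Qed.

Theorem mainTheorem9 (N : nat) (r eps c : R) (D : R -> nat -> nat -> R)
  (U : R -> Mx) (ps : list nat) :
  1 <= r -> 0 < eps < 1 / 4 -> 0 < c ->
  (forall u p q, 0 <= u <= 1 -> (1 <= p <= 2 * N)%nat -> (1 <= q <= 2 * N)%nat ->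
     D u p q = - D u q p) ->
  (forall u p q, 0 <= u <= 1 -> (1 <= p <= 2 * N)%nat -> (1 <= q <= 2 * N)%nat ->
     Rabs (D u p q) <= c * eps * r ^ 2 * lam r ^ natdist p q) ->
  is_Texp N D U ->
  monomial_index N ps ->
  Cnorm (omega N (monomial N ps) (U 1)) <=
    Rpower eps (INR (fermionic_weight ps) / 4)
    * lam r ^ qubit_weight N (monomial N ps)
    * exp (yexp eps c r * INR N).
Proof.
  intros Hr Heps Hc Hanti Hbd HT Hidx.
  destruct HT as [HU0 [Hder Hlim]].
  destruct (lam_bounds r Hr) as [L1 L2].
  set (n := (2 ^ (2 * N))%nat).
  set (om := fun m t => omega N (mono N m) (U t)).
  set (W := Wt N eps r).
  set (G := fun t => rsum (fun m => / (W m * W m) * (Re (om m t) * Re (om m t) + Im (om m t) * Im (om m t))) n).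
  set (Om := fun m u => omega N (mono N m) (mx_mul (2^N) (mx_scale Ci (Dhat N D u)) (U u))).
  set (dG := fun u => rsum (fun m => / (W m * W m) * (Re (Om m u) * Re (om m u) + Re (om m u) * Re (Om m u) + (Im (Om m u) * Im (om m u) + Im (om m u) * Im (Om m u)))) n).
  set (K := Kc N c eps r).
  assert (HWpos : forall m, 0 < W m) by (intros; apply Wt_pos; lra).
  assert (HWinv : forall m, 0 < / (W m * W m)).
  { intros m. apply Rinv_0_lt_compat. pose proof (HWpos m). nra. }
  assert (HK : 0 <= K).
  { unfold K, Kc. apply rsum_nonneg; intros; apply rsum_nonneg; intros. unfold Acoef, Rcoef.
    assert (0 < sqrt eps) by (apply sqrt_lt_R0; lra).
    assert (0 < lam r ^ span (S k) (S k0)) by (apply pow_lt; lra).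
    assert (0 < lam r ^ natdist (S k) (S k0)) by (apply pow_lt; lra).
    assert (0 < r ^ 2) by (apply pow_lt; lra).
    apply Rmult_le_pos. unfold Rdiv. apply Rmult_le_pos; [|lra].
    apply Rmult_le_pos; [|lra]. apply Rmult_le_pos; [|lra]. apply Rmult_le_pos; lra.
    left; apply Rinv_0_lt_compat; nra. }
  assert (Hgron : G 1 <= exp (2 * K) * G 0).
  { apply (gron G dG K HK).
    - intros t _. apply rsum_nonneg; intros m _. apply Rmult_le_pos. left; auto. nra.
    - intros u Hu. split.
      + apply (rsum_deriv (fun m t => / (W m * W m) * (Re (om m t) * Re (om m t) + Im (om m t) * Im (om m t)))
          (fun m u => / (W m * W m) * (Re (Om m u) * Re (om m u) + Re (om m u) * Re (Om m u) + (Im (Om m u) * Im (om m u) + Im (om m u) * Im (Om m u))))).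
        intros m Hm.
        destruct (DC_omega N (mono N m) U (mx_mul (2^N) (mx_scale Ci (Dhat N D u)) (U u)) u) as [A B].
        { intros i j Hi Hj. destruct (Hder u Hu i j Hi Hj); split; auto. }
        pose proof (derivable_pt_lim_mult _ _ _ _ _ A A) as AA.
        pose proof (derivable_pt_lim_mult _ _ _ _ _ B B) as BB.
        pose proof (derivable_pt_lim_plus _ _ _ _ _ AA BB) as S.
        pose proof (derivable_pt_lim_scal _ (/ (W m * W m)) _ _ S) as S2.
        exact S2.
      + unfold dG.
        rewrite (rsum_ext _ (fun m => / (W m * W m) * (2 * (Re (om m u) * Re (Om m u) + Im (om m u) * Im (Om m u))))).
        2:{ intros; ring. }
        unfold G, K, Kc.
        apply (schur_sum n (2 * N) (fun m => om m u) (fun m => Om m u)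
          (fun p q m => omega N (mx_mul (2^N) (majorana N (S q)) (mx_mul (2^N) (majorana N (S p)) (mono N m))) (U u))
          (fun p q => - / 4 * D u (S p) (S q)) (Acoef c eps r) (Rcoef eps r) W (fun p q m => tau (S p) (S q) m)).
        * intros m Hm. unfold Om. apply Om_expand.
        * intros p q m Hp Hq Hm. apply T_tau; auto.
        * intros p q Hp Hq. unfold Acoef. rewrite Rabs_mult.
          rewrite Rabs_Ropp, Rabs_right by lra.
          pose proof (Hbd u (S p) (S q) ltac:(lra) ltac:(lia) ltac:(lia)). lra.
        * auto.
        * intros p q m Hp Hq Hm. apply Wt_tau; auto. lra.
        * intros p q m Hp Hq Hm. split. apply tau_lt; auto; lia. apply tau_invol.
    - apply rsum_limit. intros m Hm.
      destruct (LC_omega N (mono N m) U 0) as [A B].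
      { intros i j Hi Hj. destruct (Hlim i j Hi Hj 0 (or_introl eq_refl)); split; auto. }
      pose proof (limit_mul _ _ _ _ _ _ A A) as AA.
      pose proof (limit_mul _ _ _ _ _ _ B B) as BB.
      pose proof (limit_plus _ _ _ _ _ _ AA BB) as S.
      pose proof (limit_mul _ _ _ _ _ _ (limit_const (/ (W m * W m)) _ 0) S) as S2.
      exact S2.
    - apply rsum_limit. intros m Hm.
      destruct (LC_omega N (mono N m) U 1) as [A B].
      { intros i j Hi Hj. destruct (Hlim i j Hi Hj 1 (or_intror eq_refl)); split; auto. }
      pose proof (limit_mul _ _ _ _ _ _ A A) as AA.
      pose proof (limit_mul _ _ _ _ _ _ B B) as BB.
      pose proof (limit_plus _ _ _ _ _ _ AA BB) as S.
      pose proof (limit_mul _ _ _ _ _ _ (limit_const (/ (W m * W m)) _ 1) S) as S2.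
      exact S2. }
  assert (HG0 : G 0 = 1).
  { unfold G. assert (Hn : (0 < n)%nat) by (unfold n; apply Nat.neq_0_lt_0, Nat.pow_nonzero; lia).
    rewrite (rsum_single _ n 0%nat Hn).
    - unfold om. rewrite (om_init N (U 0) 0 HU0 Hn). simpl.
      unfold W, Wt. rewrite fw0, qw_mono0. simpl. replace (0 / 4) with 0 by field. rewrite Rpower_O by lra. field.
    - intros m Hm Hm0. unfold om. rewrite (om_init N (U 0) m HU0 Hm).
      destruct (Nat.eqb_spec m 0); try lia. simpl. ring. }
  destruct (ps_mask N ps Hidx) as [ms [Hms Hl]].
  assert (Hg : / (W ms * W ms) * (Re (om ms 1) * Re (om ms 1) + Im (om ms 1) * Im (om ms 1)) <= exp (2 * K)).
  { apply Rle_trans with (G 1). unfold G at 1. apply (rsum_ge_term (fun m => / (W m * W m) * (Re (om m 1) * Re (om m 1) + Im (om m 1) * Im (om m 1))) n ms). exact Hms.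
    intros m _. apply Rmult_le_pos. left; auto. nra.
    rewrite HG0 in Hgron; lra. }
  assert (Hmono : monomial N ps = mono N ms) by (unfold mono; rewrite Hl; auto).
  rewrite Hmono. fold (om ms 1).
  set (z1 := Re (om ms 1)) in *. set (z2 := Im (om ms 1)) in *.
  pose proof (HWpos ms) as Hw.
  assert (Hz : z1 * z1 + z2 * z2 <= (W ms * exp K) * (W ms * exp K)).
  { replace ((W ms * exp K) * (W ms * exp K)) with ((W ms * W ms) * exp (2 * K)).
    2:{ replace (2 * K) with (K + K) by ring. rewrite exp_plus. ring. }
    apply Rmult_le_reg_l with (/ (W ms * W ms)). auto.
    rewrite <- Rmult_assoc, Rinv_l, Rmult_1_l by nra. auto. }
  assert (Hn1 : Cnorm (om ms 1) <= W ms * exp K).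
  { unfold Cnorm. fold z1 z2. rewrite <- (sqrt_square (W ms * exp K)).
    apply sqrt_le_1_alt; auto. pose proof (exp_pos K). nra. }
  eapply Rle_trans. apply Hn1.
  unfold W, Wt.
  assert (Hfw : fw N ms = fermionic_weight ps) by (unfold fw, fermionic_weight; rewrite Hl; auto).
  rewrite Hfw.
  assert (Hq : lam r ^ qw N (mono N ms) <= lam r ^ qubit_weight N (mono N ms)).
  { apply pow_le_exp. lra. apply qubit_weight_le. }
  assert (HKb : exp K <= exp (yexp eps c r * INR N)).
  { pose proof (K_bound N c eps r Hc ltac:(lra) Hr). fold K in H.
    destruct (Req_dec K (yexp eps c r * INR N)). rewrite H0; lra. left; apply exp_increasing; lra. }
  assert (0 < Rpower eps (INR (fermionic_weight ps) / 4)) by (unfold Rpower; apply exp_pos).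
  assert (0 < lam r ^ qw N (mono N ms)) by (apply pow_lt; lra).
  assert (0 < exp K) by apply exp_pos.
  apply Rmult_le_compat. nra. lra.
  apply Rmult_le_compat_l; lra. auto.
Qed.
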